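(* Let $M$ be an oriented timelike surface in $\mathbb{R}^{3,1}$ with a canonical null direction with respect to a constant unit spacelike vector $Z$ such that $II(Z^\top,Z^\top)\neq0$ everywhere, and let $G:M\to\Lambda^2\mathbb{R}^{3,1}$ be its Gauss map. Then the complex quadratic form $G^*H$ vanishes identically on $M$ if and only if $M$ is minimal and has flat normal bundle.
   Context: $\mathbb{R}^{3,1}$ is $\mathbb{R}^{4}$ with the metric $-dx_1^2+dx_2^2+dx_3^2+dx_4^2$ and canonical basis $e_1,\dots,e_4$. A surface is timelike if the induced metric has signature $(1,1)$; a vector $v$ is lightlike if $v\ne0$ and $\langle v,v\rangle=0$. For a constant vector $Z$, $Z=Z^\top+Z^\perp$ along $M$; $M$ has a canonical null direction with respect to $Z$ if $Z^\top$ is lightlike everywhere. $\Lambda^2\mathbb{R}^{3,1}$ carries the induced metric $\langle u_1\wedge u_2,v_1\wedge v_2\rangle=\det(\langle u_i,v_j\rangle)$; $\Lambda^4\mathbb{R}^{3,1}$ is identified with $\mathbb{R}$ via $e_1\wedge e_2\wedge e_3\wedge e_4\mapsto1$. Define the $\mathbb{C}$-valued form $H(\eta,\eta')=\langle\eta,\eta'\rangle+\mathrm{i}\,\eta\wedge\eta'$ ($\mathrm{i}$ the imaginary unit). The Gauss map is $G(p)=u_1\wedge u_2$ for a positively oriented orthonormal basis $(u_1,u_2)$ of $T_pM$, and $G^*H$ is the complex quadratic form $u\mapsto H(dG_p(u),dG_p(u))$ on $T_pM$. Minimal means the mean curvature vector $\frac12\operatorname{tr}II$ vanishes; flat normal bundle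 means the normal curvature tensor vanishes. *)

(* Defs.v *)
From Stdlib Require Import Reals Lra ClassicalEpsilon.
Open Scope R_scope.

Record V4 := mkV4 { x1 : R; x2 : R; x3 : R; x4 : R }.

Definition vzero : V4 := mkV4 0 0 0 0.
Definition vadd (u v : V4) : V4 :=
  mkV4 (x1 u + x1 v) (x2 u + x2 v) (x3 u + x3 v) (x4 u + x4 v).
Definition vscal (a : R) (u : V4) : V4 :=
  mkV4 (a * x1 u) (a * x2 u) (a * x3 u) (a * x4 u).
Definition vsub (u v : V4) : V4 := vadd u (vscal (-1) v).

Definition mink (u v : V4) : R :=
  - x1 u * x1 v + x2 u * x2 v + x3 u * x3 v + x4 u * x4 v.

Definition lightlike (v : V4) : Prop := v <> vzero /\ mink v v = 0.

Record Biv := mkBiv { b12 : R; b13 : R; b14 : R; b23 : R; b24 : R; b34 : R }.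

Definition bzero : Biv := mkBiv 0 0 0 0 0 0.
Definition badd (a b : Biv) : Biv :=
  mkBiv (b12 a + b12 b) (b13 a + b13 b) (b14 a + b14 b)
        (b23 a + b23 b) (b24 a + b24 b) (b34 a + b34 b).
Definition bscal (c : R) (a : Biv) : Biv :=
  mkBiv (c * b12 a) (c * b13 a) (c * b14 a) (c * b23 a) (c * b24 a) (c * b34 a).

Definition wedge (u v : V4) : Biv :=
  mkBiv (x1 u * x2 v - x2 u * x1 v) (x1 u * x3 v - x3 u * x1 v)
        (x1 u * x4 v - x4 u * x1 v) (x2 u * x3 v - x3 u * x2 v)
        (x2 u * x4 v - x4 u * x2 v) (x3 u * x4 v - x4 u * x3 v).

(* Induced metric <u1^u2, v1^v2> = det(<u_i,v_j>), extended bilinearly: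
   the basis e_i^e_j (i<j) is orthogonal with <e_i^e_j,e_i^e_j> = eta_ii eta_jj. *)
Definition bivmet (a b : Biv) : R :=
  - b12 a * b12 b - b13 a * b13 b - b14 a * b14 b
  + b23 a * b23 b + b24 a * b24 b + b34 a * b34 b.

(* a /\ b in Lambda^4 identified with R via e1^e2^e3^e4 |-> 1 *)
Definition bivwedge (a b : Biv) : R :=
  b12 a * b34 b - b13 a * b24 b + b14 a * b23 b
  + b23 a * b14 b - b24 a * b13 b + b34 a * b12 b.

(* complex-valued H(eta,eta') = <eta,eta'> + i eta^eta', as (Re, Im) *)
Definition Hform (a b : Biv) : R * R := (bivmet a b, bivwedge a b).

Definition open2 (U : R -> R -> Prop) : Prop :=
  forall s t, U s t -> exists eps, 0 < eps /\
    forall s' t', Rabs (s' - s) < eps -> Rabs (t' - t) < eps -> U s' t'.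

Definition pd1 (f : R -> R -> R) (s t : R) : R :=
  epsilon (inhabits 0) (fun l => derivable_pt_lim (fun x => f x t) s l).
Definition pd2 (f : R -> R -> R) (s t : R) : R :=
  epsilon (inhabits 0) (fun l => derivable_pt_lim (fun y => f s y) t l).

Definition cont2_on (U : R -> R -> Prop) (f : R -> R -> R) : Prop :=
  forall s t, U s t -> forall e, 0 < e -> exists d, 0 < d /\
    forall s' t', Rabs (s' - s) < d -> Rabs (t' - t) < d ->
      Rabs (f s' t' - f s t) < e.

Fixpoint Ck_on (U : R -> R -> Prop) (k : nat) (f : R -> R -> R) : Prop :=
  match k with
  | O => cont2_on U f
  | S k' => cont2_on U f /\
      (forall s t, U s t ->
         (exists l, derivable_pt_lim (fun x => f x t) s l) /\
         (exists l, derivable_pt_lim (fun y => f s y) t l)) /\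
      Ck_on U k' (pd1 f) /\ Ck_on U k' (pd2 f)
  end.

Definition smooth_on (U : R -> R -> Prop) (f : R -> R -> R) : Prop :=
  forall k, Ck_on U k f.

Definition smoothV_on (U : R -> R -> Prop) (F : R -> R -> V4) : Prop :=
  smooth_on U (fun s t => x1 (F s t)) /\ smooth_on U (fun s t => x2 (F s t)) /\
  smooth_on U (fun s t => x3 (F s t)) /\ smooth_on U (fun s t => x4 (F s t)).

Definition pd1V (F : R -> R -> V4) (s t : R) : V4 :=
  mkV4 (pd1 (fun s t => x1 (F s t)) s t) (pd1 (fun s t => x2 (F s t)) s t)
       (pd1 (fun s t => x3 (F s t)) s t) (pd1 (fun s t => x4 (F s t)) s t).
Definition pd2V (F : R -> R -> V4) (s t : R) : V4 :=
  mkV4 (pd2 (fun s t => x1 (F s t)) s t) (pd2 (fun s t => x2 (F s t)) s t)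
       (pd2 (fun s t => x3 (F s t)) s t) (pd2 (fun s t => x4 (F s t)) s t).

Definition pd1B (F : R -> R -> Biv) (s t : R) : Biv :=
  mkBiv (pd1 (fun s t => b12 (F s t)) s t) (pd1 (fun s t => b13 (F s t)) s t)
        (pd1 (fun s t => b14 (F s t)) s t) (pd1 (fun s t => b23 (F s t)) s t)
        (pd1 (fun s t => b24 (F s t)) s t) (pd1 (fun s t => b34 (F s t)) s t).
Definition pd2B (F : R -> R -> Biv) (s t : R) : Biv :=
  mkBiv (pd2 (fun s t => b12 (F s t)) s t) (pd2 (fun s t => b13 (F s t)) s t)
        (pd2 (fun s t => b14 (F s t)) s t) (pd2 (fun s t => b23 (F s t)) s t)
        (pd2 (fun s t => b24 (F s t)) s t) (pd2 (fun s t => b34 (F s t)) s t).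

(* ---------- the surface: an oriented chart X : U -> R^{3,1} ----------
   Tangent vectors at (s,t) are written in the coordinate basis
   (X_s, X_t) as coefficient pairs (a,b); the orientation is the one of
   the chart (X_s, X_t). *)
Section Surf.
Variable X : R -> R -> V4.

Definition Xs := pd1V X.
Definition Xt := pd2V X.
Definition g11 s t := mink (Xs s t) (Xs s t).
Definition g12 s t := mink (Xs s t) (Xt s t).
Definition g22 s t := mink (Xt s t) (Xt s t).
Definition gdet s t := g11 s t * g22 s t - g12 s t * g12 s t.

(* induced metric of signature (1,1) *)
Definition timelike_at s t : Prop := gdet s t < 0.

Definition tvec s t (a b : R) : V4 := vadd (vscal a (Xs s t)) (vscal b (Xt s t)).

Definition tan_coef1 s t (v : V4) : R :=
  (g22 s t * mink v (Xs s t) - g12 s t * mink v (Xt s t)) / gdet s t.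
Definition tan_coef2 s t (v : V4) : R :=
  (- g12 s t * mink v (Xs s t) + g11 s t * mink v (Xt s t)) / gdet s t.
Definition tanpart s t (v : V4) : V4 := tvec s t (tan_coef1 s t v) (tan_coef2 s t v).
Definition norpart s t (v : V4) : V4 := vsub v (tanpart s t v).

Definition N11 s t := norpart s t (pd1V (pd1V X) s t).
Definition N12 s t := norpart s t (pd2V (pd1V X) s t).
Definition N22 s t := norpart s t (pd2V (pd2V X) s t).
Definition II s t (a1 b1 a2 b2 : R) : V4 :=
  vadd (vadd (vscal (a1 * a2) (N11 s t)) (vscal (a1 * b2 + b1 * a2) (N12 s t)))
       (vscal (b1 * b2) (N22 s t)).

(* mean curvature vector (1/2) tr_g II = (1/2) g^{ij} II_ij *)
Definition meancurv s t : V4 :=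
  vscal (/ 2 * / gdet s t)
    (vadd (vadd (vscal (g22 s t) (N11 s t)) (vscal (-2 * g12 s t) (N12 s t)))
          (vscal (g11 s t) (N22 s t))).

Definition pos_orthonormal s t (a1 b1 a2 b2 : R) : Prop :=
  Rabs (mink (tvec s t a1 b1) (tvec s t a1 b1)) = 1 /\
  Rabs (mink (tvec s t a2 b2) (tvec s t a2 b2)) = 1 /\
  mink (tvec s t a1 b1) (tvec s t a2 b2) = 0 /\
  a1 * b2 - b1 * a2 > 0.

Definition Gauss (s t : R) : Biv :=
  epsilon (inhabits bzero) (fun w => exists a1 b1 a2 b2,
     pos_orthonormal s t a1 b1 a2 b2 /\ w = wedge (tvec s t a1 b1) (tvec s t a2 b2)).

Definition dGauss s t (a b : R) : Biv :=
  badd (bscal a (pd1B Gauss s t)) (bscal b (pd2B Gauss s t)).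
Definition GstarH s t (a b : R) : R * R := Hform (dGauss s t a b) (dGauss s t a b).

Definition normal_field (U : R -> R -> Prop) (xi : R -> R -> V4) : Prop :=
  smoothV_on U xi /\
  forall s t, U s t -> mink (xi s t) (Xs s t) = 0 /\ mink (xi s t) (Xt s t) = 0.

Definition nabla1 (xi : R -> R -> V4) s t : V4 := norpart s t (pd1V xi s t).
Definition nabla2 (xi : R -> R -> V4) s t : V4 := norpart s t (pd2V xi s t).

(* R^perp(d_s, d_t) xi  (coordinate fields commute) *)
Definition Rperp (xi : R -> R -> V4) s t : V4 :=
  vsub (nabla1 (nabla2 xi) s t) (nabla2 (nabla1 xi) s t).

End Surf.

Definition minimal_on (U : R -> R -> Prop) (X : R -> R -> V4) : Prop :=
  forall s t, U s t -> meancurv X s t = vzero.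

(* the normal curvature tensor vanishes: R^perp(d_s,d_t) = 0 on all normal fields
   (R^perp is tensorial and skew, so this is R^perp = 0) *)
Definition flat_normal_on (U : R -> R -> Prop) (X : R -> R -> V4) : Prop :=
  forall xi, normal_field X U xi -> forall s t, U s t -> Rperp X xi s t = vzero.

(* Main.v *)
Require Import Defs.
From Stdlib Require Import Reals Lra ClassicalEpsilon.
From Coquelicot Require Import Coquelicot.
Open Scope R_scope.

Unset Default Proof Using.

Lemma Dmult (f g : R -> R) x df dg : is_derive f x df -> is_derive g x dg ->
  is_derive (fun y => f y * g y) x (df * g x + f x * dg).
Proof. intros Hf Hg. exact (is_derive_mult f g x df dg Hf Hg Rmult_comm). Qed.
Lemma Dplus (f g : R -> R) x df dg : is_derive f x df -> is_derive g x dg ->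
  is_derive (fun y => f y + g y) x (df + dg).
Proof. intros Hf Hg. exact (is_derive_plus f g x df dg Hf Hg). Qed.
Lemma Dminus (f g : R -> R) x df dg : is_derive f x df -> is_derive g x dg ->
  is_derive (fun y => f y - g y) x (df - dg).
Proof. intros Hf Hg. exact (is_derive_minus f g x df dg Hf Hg). Qed.
Lemma Dconst (c : R) x : is_derive (fun _ => c) x 0.
Proof. exact (is_derive_const c x). Qed.
Lemma Dinv (f : R -> R) x df : is_derive f x df -> f x <> 0 ->
  is_derive (fun y => / f y) x (- df / (f x * f x)).
Proof. intros H H0. replace (f x * f x) with (f x ^ 2) by ring. now apply is_derive_inv. Qed.
Lemma Dsqrt (f : R -> R) x df : is_derive f x df -> 0 < f x ->
  is_derive (fun y => sqrt (f y)) x (df * / (2 * sqrt (f x))).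
Proof. intros H H0.
  assert (H1 := is_derive_comp sqrt f x (/ (2 * sqrt (f x))) df).
  replace (df * / (2 * sqrt (f x))) with (scal df (/ (2 * sqrt (f x)))).
  apply H1; auto. apply is_derive_Reals. now apply derivable_pt_lim_sqrt.
  reflexivity. Qed.
Lemma Dext (f g : R -> R) x l : locally x (fun y => f y = g y) -> is_derive f x l -> is_derive g x l.
Proof. apply is_derive_ext_loc. Qed.
Lemma Dunique (f : R -> R) x l1 l2 : is_derive f x l1 -> is_derive f x l2 -> l1 = l2.
Proof. intros H1 H2. apply is_derive_unique in H1. apply is_derive_unique in H2. congruence. Qed.

Lemma pd1_eq f s t l : is_derive (fun x => f x t) s l -> pd1 f s t = l.
Proof. intros H. unfold pd1.
  assert (E : exists l, derivable_pt_lim (fun x => f x t) s l) by (exists l; now apply is_derive_Reals).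
  apply (Dunique (fun x => f x t) s). apply is_derive_Reals. apply epsilon_spec. exact E. exact H. Qed.
Lemma pd2_eq f s t l : is_derive (fun y => f s y) t l -> pd2 f s t = l.
Proof. intros H. unfold pd2.
  assert (E : exists l, derivable_pt_lim (fun y => f s y) t l) by (exists l; now apply is_derive_Reals).
  apply (Dunique (fun y => f s y) t). apply is_derive_Reals. apply epsilon_spec. exact E. exact H. Qed.

Unset Default Proof Using.

Section Opn.
Variable U : R -> R -> Prop.
Hypothesis HU : open2 U.

Lemma open_loc1 s t : U s t -> locally s (fun x => U x t).
Proof. intros H. destruct (HU s t H) as [e [He H']].
  exists (mkposreal e He). intros y Hy. apply H'. exact Hy. rewrite Rminus_diag, Rabs_R0; exact He. Qed.
Lemma open_loc2 s t : U s t -> locally t (fun y => U s y).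
Proof. intros H. destruct (HU s t H) as [e [He H']].
  exists (mkposreal e He). intros y Hy. apply H'. rewrite Rminus_diag, Rabs_R0; exact He. exact Hy. Qed.
Lemma open_loc2d s t : U s t -> locally_2d U s t.
Proof. intros H. destruct (HU s t H) as [e [He H']]. exists (mkposreal e He). intros; apply H'; auto. Qed.

Lemma cont2_pt f : cont2_on U f <-> forall s t, U s t -> continuity_2d_pt f s t.
Proof. split.
- intros H s t Hst eps. destruct (H s t Hst eps (cond_pos eps)) as [d [Hd H']].
  exists (mkposreal d Hd). intros; apply H'; auto.
- intros H s t Hst e He. destruct (H s t Hst (mkposreal e He)) as [[d Hd] H'].
  exists d; split; auto. Qed.

Lemma Ck_cont k f : Ck_on U k f -> forall s t, U s t -> continuity_2d_pt f s t.
Proof. destruct k; simpl; intros H; apply cont2_pt; [exact H | apply H]. Qed.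

Lemma Ck_d1 k f s t : Ck_on U (S k) f -> U s t -> is_derive (fun x => f x t) s (pd1 f s t).
Proof. intros [_ [H _]] Hst. destruct (H s t Hst) as [[l Hl] _].
  apply is_derive_Reals. unfold pd1. apply epsilon_spec. exists l; exact Hl. Qed.
Lemma Ck_d2 k f s t : Ck_on U (S k) f -> U s t -> is_derive (fun y => f s y) t (pd2 f s t).
Proof. intros [_ [H _]] Hst. destruct (H s t Hst) as [_ [l Hl]].
  apply is_derive_Reals. unfold pd2. apply epsilon_spec. exists l; exact Hl. Qed.

Lemma Ck_mono k : forall f, Ck_on U (S k) f -> Ck_on U k f.
Proof. induction k; intros f H.
- apply H.
- destruct H as [H1 [H2 [H3 H4]]]. split; [|split; [|split]]; auto. Qed.
Lemma Ck_mono_le k m f : (k <= m)%nat -> Ck_on U m f -> Ck_on U k f.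
Proof. induction 1; auto. intros H0; apply IHle; apply Ck_mono; auto. Qed.

Lemma Ck_pd1 k f : Ck_on U (S k) f -> Ck_on U k (pd1 f).
Proof. intros H; apply H. Qed.
Lemma Ck_pd2 k f : Ck_on U (S k) f -> Ck_on U k (pd2 f).
Proof. intros H; apply H. Qed.

Ltac dd := match goal with
 | Hst : U ?s ?t, Hf : Ck_on U (S _) ?f |- _ => first [exact (Ck_d1 _ f s t Hf Hst) | exact (Ck_d2 _ f s t Hf Hst)]
 end.
Lemma Ck_ext k : forall f g, (forall s t, U s t -> f s t = g s t) -> Ck_on U k f -> Ck_on U k g.
Proof. induction k; intros f g E H.
- apply cont2_pt. intros s t Hst. apply continuity_2d_pt_ext_loc with f.
  + destruct (open_loc2d s t Hst) as [d Hd]. exists d; intros; apply E, Hd; auto.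
  + now apply (Ck_cont 0).
- assert (D1 : forall s t, U s t -> is_derive (fun x => g x t) s (pd1 f s t)).
  { intros s t Hst. apply Dext with (fun x => f x t). destruct (open_loc1 s t Hst) as [d Hd].
    exists d; intros; apply E, Hd; auto. now apply (Ck_d1 k). }
  assert (D2 : forall s t, U s t -> is_derive (fun y => g s y) t (pd2 f s t)).
  { intros s t Hst. apply Dext with (fun y => f s y). destruct (open_loc2 s t Hst) as [d Hd].
    exists d; intros; apply E, Hd; auto. now apply (Ck_d2 k). }
  split; [|split; [|split]].
  + apply cont2_pt. intros s t Hst. apply continuity_2d_pt_ext_loc with f.
    * destruct (open_loc2d s t Hst) as [d Hd]. exists d; intros; apply E, Hd; auto.
    * now apply (Ck_cont (S k)).
  + intros s t Hst. split; [exists (pd1 f s t) | exists (pd2 f s t)]; apply is_derive_Reals; auto.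
  + apply IHk with (pd1 f). intros s t Hst; symmetry; apply pd1_eq; auto. apply H.
  + apply IHk with (pd2 f). intros s t Hst; symmetry; apply pd2_eq; auto. apply H. Qed.

Lemma Ck_const k c : Ck_on U k (fun _ _ => c).
Proof. revert c; induction k; intros c.
- apply cont2_pt; intros; apply continuity_2d_pt_const.
- split; [|split; [|split]].
  + apply cont2_pt; intros; apply continuity_2d_pt_const.
  + intros s t _; split; exists 0; apply is_derive_Reals; apply Dconst.
  + apply Ck_ext with (fun _ _ => 0). intros s t Hst; symmetry; apply pd1_eq, Dconst. apply IHk.
  + apply Ck_ext with (fun _ _ => 0). intros s t Hst; symmetry; apply pd2_eq, Dconst. apply IHk. Qed.

Lemma Ck_plus k : forall f g, Ck_on U k f -> Ck_on U k g -> Ck_on U k (fun s t => f s t + g s t).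
Proof. induction k; intros f g Hf Hg.
- apply cont2_pt; intros s t Hst; apply continuity_2d_pt_plus; [exact (Ck_cont 0 _ Hf s t Hst)|exact (Ck_cont 0 _ Hg s t Hst)].
- split; [|split; [|split]].
  + apply cont2_pt; intros s t Hst; apply continuity_2d_pt_plus; [exact (Ck_cont _ _ Hf s t Hst)|exact (Ck_cont _ _ Hg s t Hst)].
  + intros s t Hst; split; [exists (pd1 f s t + pd1 g s t) | exists (pd2 f s t + pd2 g s t)];
    apply is_derive_Reals; apply Dplus; dd.
  + apply Ck_ext with (fun s t => pd1 f s t + pd1 g s t).
    intros s t Hst; symmetry; apply pd1_eq, Dplus; dd.
    apply IHk; [apply Hf | apply Hg].
  + apply Ck_ext with (fun s t => pd2 f s t + pd2 g s t).
    intros s t Hst; symmetry; apply pd2_eq, Dplus; dd.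
    apply IHk; [apply Hf | apply Hg]. Qed.

Lemma Ck_mult k : forall f g, Ck_on U k f -> Ck_on U k g -> Ck_on U k (fun s t => f s t * g s t).
Proof. induction k; intros f g Hf Hg.
- apply cont2_pt; intros s t Hst; apply continuity_2d_pt_mult; [exact (Ck_cont 0 _ Hf s t Hst)|exact (Ck_cont 0 _ Hg s t Hst)].
- split; [|split; [|split]].
  + apply cont2_pt; intros s t Hst; apply continuity_2d_pt_mult; [exact (Ck_cont _ _ Hf s t Hst)|exact (Ck_cont _ _ Hg s t Hst)].
  + intros s t Hst; split; eexists; apply is_derive_Reals; apply Dmult;
    dd.
  + apply Ck_ext with (fun s t => pd1 f s t * g s t + f s t * pd1 g s t).
    intros s t Hst; symmetry; apply pd1_eq; apply (Dmult (fun x => f x t) (fun x => g x t)); dd.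
    apply Ck_plus; apply IHk; first [exact (Ck_pd1 _ _ Hf) | exact (Ck_pd1 _ _ Hg) | exact (Ck_pd2 _ _ Hf) | exact (Ck_pd2 _ _ Hg) | exact (Ck_mono _ _ Hf) | exact (Ck_mono _ _ Hg)].
  + apply Ck_ext with (fun s t => pd2 f s t * g s t + f s t * pd2 g s t).
    intros s t Hst; symmetry; apply pd2_eq; apply (Dmult (fun y => f s y) (fun y => g s y)); dd.
    apply Ck_plus; apply IHk; first [exact (Ck_pd1 _ _ Hf) | exact (Ck_pd1 _ _ Hg) | exact (Ck_pd2 _ _ Hf) | exact (Ck_pd2 _ _ Hg) | exact (Ck_mono _ _ Hf) | exact (Ck_mono _ _ Hg)]. Qed.

Lemma Ck_inv k : forall f, (forall s t, U s t -> f s t <> 0) -> Ck_on U k f -> Ck_on U k (fun s t => / f s t).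
Proof. induction k; intros f Hnz Hf.
- apply cont2_pt; intros s t Hst; apply continuity_2d_pt_inv; [exact (Ck_cont _ _ Hf s t Hst)|auto].
- split; [|split; [|split]].
  + apply cont2_pt; intros s t Hst; apply continuity_2d_pt_inv; [exact (Ck_cont _ _ Hf s t Hst)|auto].
  + intros s t Hst; split; eexists; apply is_derive_Reals; apply Dinv; auto;
    dd.
  + apply Ck_ext with (fun s t => (-1 * pd1 f s t) * (/ f s t * / f s t)).
    intros s t Hst; symmetry; apply pd1_eq.
    replace ((-1 * pd1 f s t) * (/ f s t * / f s t)) with (- pd1 f s t / (f s t * f s t)) by (field; auto).
    apply (Dinv (fun x => f x t)); [dd|auto].
    apply Ck_mult. apply Ck_mult. apply Ck_const. exact (Ck_pd1 _ _ Hf).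
    apply Ck_mult; apply IHk; auto; exact (Ck_mono _ _ Hf).
  + apply Ck_ext with (fun s t => (-1 * pd2 f s t) * (/ f s t * / f s t)).
    intros s t Hst; symmetry; apply pd2_eq.
    replace ((-1 * pd2 f s t) * (/ f s t * / f s t)) with (- pd2 f s t / (f s t * f s t)) by (field; auto).
    apply (Dinv (fun y => f s y)); [dd|auto].
    apply Ck_mult. apply Ck_mult. apply Ck_const. exact (Ck_pd2 _ _ Hf).
    apply Ck_mult; apply IHk; auto; exact (Ck_mono _ _ Hf). Qed.
End Opn.

Set Default Proof Using "All".

Definition Dv (F : R -> V4) x (L : V4) : Prop :=
  is_derive (fun y => x1 (F y)) x (x1 L) /\ is_derive (fun y => x2 (F y)) x (x2 L) /\
  is_derive (fun y => x3 (F y)) x (x3 L) /\ is_derive (fun y => x4 (F y)) x (x4 L).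

Lemma Dval (f : R -> R) x l l' : is_derive f x l -> l = l' -> is_derive f x l'.
Proof. intros H <-; exact H. Qed.

Ltac toR := match goal with |- ?a = ?b => change (@eq R a b) end; cbv beta.

Lemma Dext_all (f g : R -> R) x l : is_derive f x l -> (forall y : R, f y = g y) -> is_derive g x l.
Proof. intros H E. apply is_derive_ext with f; auto. Qed.

Lemma Dv_mink F G x L M : Dv F x L -> Dv G x M ->
  is_derive (fun y => mink (F y) (G y)) x (mink L (G x) + mink (F x) M).
Proof. intros [F1 [F2 [F3 F4]]] [G1 [G2 [G3 G4]]].
  assert (H := Dplus _ _ _ _ _ (Dplus _ _ _ _ _ (Dplus _ _ _ _ _
     (Dmult _ _ _ _ _ (Dmult _ _ _ _ _ (Dconst (-1) x) F1) G1)
     (Dmult _ _ _ _ _ F2 G2)) (Dmult _ _ _ _ _ F3 G3)) (Dmult _ _ _ _ _ F4 G4)).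
  eapply Dval; [eapply Dext_all; [exact H| intros y; cbv beta; unfold mink; ring] | toR; unfold mink; ring]. Qed.

Lemma Dv_add F G x L M : Dv F x L -> Dv G x M -> Dv (fun y => vadd (F y) (G y)) x (vadd L M).
Proof. intros [F1 [F2 [F3 F4]]] [G1 [G2 [G3 G4]]]. split; [|split; [|split]]; simpl; apply Dplus; auto. Qed.
Lemma Dv_scal f F x l L : is_derive f x l -> Dv F x L ->
  Dv (fun y => vscal (f y) (F y)) x (vadd (vscal l (F x)) (vscal (f x) L)).
Proof. intros Hf [F1 [F2 [F3 F4]]]. split; [|split; [|split]]; simpl; apply Dmult; auto. Qed.
Lemma Dv_const (C : V4) x : Dv (fun _ => C) x vzero.
Proof. split; [|split; [|split]]; simpl; apply Dconst. Qed.
Lemma Dv_ext F G x L : locally x (fun y => F y = G y) -> Dv F x L -> Dv G x L.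
Proof. intros E [F1 [F2 [F3 F4]]].
  split; [|split; [|split]]; eapply Dext; try eassumption; destruct E as [d Hd]; exists d; intros y Hy; rewrite (Hd y Hy); reflexivity. Qed.

Lemma Dv_val F x L L' : Dv F x L -> L = L' -> Dv F x L'.
Proof. intros H <-; exact H. Qed.

Lemma V4_eta (v : V4) : v = mkV4 (x1 v) (x2 v) (x3 v) (x4 v).
Proof. destruct v; reflexivity. Qed.

Lemma pd1V_eq F s t L : Dv (fun x => F x t) s L -> pd1V F s t = L.
Proof. intros [F1 [F2 [F3 F4]]]. unfold pd1V. rewrite (V4_eta L).
  f_equal; apply pd1_eq; assumption. Qed.
Lemma pd2V_eq F s t L : Dv (fun y => F s y) t L -> pd2V F s t = L.
Proof. intros [F1 [F2 [F3 F4]]]. unfold pd2V. rewrite (V4_eta L).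
  f_equal; apply pd2_eq; assumption. Qed.

Section Sm.
Variable U : R -> R -> Prop.
Hypothesis HU : open2 U.

Lemma sm_d1 f s t : smooth_on U f -> U s t -> is_derive (fun x => f x t) s (pd1 f s t).
Proof. intros H Hst. apply (Ck_d1 U 0); auto. Qed.
Lemma sm_d2 f s t : smooth_on U f -> U s t -> is_derive (fun y => f s y) t (pd2 f s t).
Proof. intros H Hst. apply (Ck_d2 U 0); auto. Qed.
Lemma sm_pd1 f : smooth_on U f -> smooth_on U (pd1 f).
Proof. intros H k. apply (H (S k)). Qed.
Lemma sm_pd2 f : smooth_on U f -> smooth_on U (pd2 f).
Proof. intros H k. apply (H (S k)). Qed.
Lemma sm_plus f g : smooth_on U f -> smooth_on U g -> smooth_on U (fun s t => f s t + g s t).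
Proof. intros Hf Hg k. apply Ck_plus; auto. Qed.
Lemma sm_mult f g : smooth_on U f -> smooth_on U g -> smooth_on U (fun s t => f s t * g s t).
Proof. intros Hf Hg k. apply Ck_mult; auto. Qed.
Lemma sm_const c : smooth_on U (fun _ _ => c).
Proof. intros k. apply Ck_const; auto. Qed.
Lemma sm_inv f : (forall s t, U s t -> f s t <> 0) -> smooth_on U f -> smooth_on U (fun s t => / f s t).
Proof. intros Hn Hf k. apply Ck_inv; auto. Qed.
Lemma sm_ext f g : (forall s t, U s t -> f s t = g s t) -> smooth_on U f -> smooth_on U g.
Proof. intros E Hf k. eapply Ck_ext; eauto. Qed.
Lemma sm_opp f : smooth_on U f -> smooth_on U (fun s t => - f s t).
Proof. intros Hf. apply sm_ext with (fun s t => -1 * f s t). intros; ring.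
  apply sm_mult; auto using sm_const. Qed.
Lemma sm_minus f g : smooth_on U f -> smooth_on U g -> smooth_on U (fun s t => f s t - g s t).
Proof. intros Hf Hg. apply sm_plus; auto using sm_opp. Qed.
Lemma sm_div f g : (forall s t, U s t -> g s t <> 0) -> smooth_on U f -> smooth_on U g -> smooth_on U (fun s t => f s t / g s t).
Proof. intros Hn Hf Hg. apply sm_mult; auto using sm_inv. Qed.

Lemma smV_d1 F s t : smoothV_on U F -> U s t -> Dv (fun x => F x t) s (pd1V F s t).
Proof. intros [H1 [H2 [H3 H4]]] Hst. split; [|split; [|split]]; simpl; apply sm_d1; auto. Qed.
Lemma smV_d2 F s t : smoothV_on U F -> U s t -> Dv (fun y => F s y) t (pd2V F s t).
Proof. intros [H1 [H2 [H3 H4]]] Hst. split; [|split; [|split]]; simpl; apply sm_d2; auto. Qed.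
Lemma smV_pd1 F : smoothV_on U F -> smoothV_on U (pd1V F).
Proof. intros [H1 [H2 [H3 H4]]]. split; [|split; [|split]]; apply sm_pd1; auto. Qed.
Lemma smV_pd2 F : smoothV_on U F -> smoothV_on U (pd2V F).
Proof. intros [H1 [H2 [H3 H4]]]. split; [|split; [|split]]; apply sm_pd2; auto. Qed.
Lemma smV_add F G : smoothV_on U F -> smoothV_on U G -> smoothV_on U (fun s t => vadd (F s t) (G s t)).
Proof. intros [F1 [F2 [F3 F4]]] [G1 [G2 [G3 G4]]]. split; [|split; [|split]]; apply sm_plus; auto. Qed.
Lemma smV_scal f F : smooth_on U f -> smoothV_on U F -> smoothV_on U (fun s t => vscal (f s t) (F s t)).
Proof. intros Hf [F1 [F2 [F3 F4]]]. split; [|split; [|split]]; apply sm_mult; auto. Qed.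
Lemma smV_const C : smoothV_on U (fun _ _ => C).
Proof. split; [|split; [|split]]; apply sm_const. Qed.
Lemma smV_sub F G : smoothV_on U F -> smoothV_on U G -> smoothV_on U (fun s t => vsub (F s t) (G s t)).
Proof. intros HF HG. unfold vsub. apply smV_add; auto. apply smV_scal; auto using sm_const. Qed.
Lemma sm_mink F G : smoothV_on U F -> smoothV_on U G -> smooth_on U (fun s t => mink (F s t) (G s t)).
Proof. intros [F1 [F2 [F3 F4]]] [G1 [G2 [G3 G4]]]. unfold mink.
  repeat apply sm_plus; repeat apply sm_mult; auto. apply sm_opp; auto. Qed.

Lemma Derive_pd1 f s t : smooth_on U f -> U s t -> Derive (fun x => f x t) s = pd1 f s t.
Proof. intros; apply is_derive_unique, sm_d1; auto. Qed.
Lemma Derive_pd2 f s t : smooth_on U f -> U s t -> Derive (fun y => f s y) t = pd2 f s t.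
Proof. intros; apply is_derive_unique, sm_d2; auto. Qed.

Lemma schwarz f s t : smooth_on U f -> U s t -> pd1 (pd2 f) s t = pd2 (pd1 f) s t.
Proof. intros Hf Hst.
  assert (Hl := open_loc2d U HU s t Hst). destruct Hl as [d Hd].
  assert (E1 : forall u v, U u v -> Derive (fun z => Derive (fun t0 => f z t0) v) u = pd1 (pd2 f) u v).
  { intros u v Huv. erewrite Derive_ext_loc. apply is_derive_unique, sm_d1; auto. apply sm_pd2; auto.
    destruct (open_loc1 U HU u v Huv) as [e He]. exists e. intros y Hy. apply Derive_pd2; auto. }
  assert (E2 : forall u v, U u v -> Derive (fun z => Derive (fun t0 => f t0 z) u) v = pd2 (pd1 f) u v).
  { intros u v Huv. erewrite Derive_ext_loc. apply is_derive_unique, sm_d2; auto. apply sm_pd1; auto.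
    destruct (open_loc2 U HU u v Huv) as [e He]. exists e. intros y Hy. apply Derive_pd1; auto. }
  rewrite <- E1, <- E2; auto.
  apply Schwarz.
  - exists d. intros u v Hu Hv. assert (Huv : U u v) by (apply Hd; auto).
    split; [|split; [|split]].
    + eexists; apply sm_d1; auto.
    + eexists; apply sm_d2; auto.
    + eexists. eapply is_derive_ext_loc. 2: exact (sm_d1 (pd2 f) u v (sm_pd2 f Hf) Huv).
      destruct (open_loc1 U HU u v Huv) as [e He]. exists e. intros y Hy. symmetry; apply Derive_pd2; auto.
    + eexists. eapply is_derive_ext_loc. 2: exact (sm_d2 (pd1 f) u v (sm_pd1 f Hf) Huv).
      destruct (open_loc2 U HU u v Huv) as [e He]. exists e. intros y Hy. symmetry; apply Derive_pd1; auto.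
  - apply continuity_2d_pt_ext_loc with (pd1 (pd2 f)).
    + exists d. intros u v Hu Hv. symmetry; apply E1, Hd; auto.
    + apply (Ck_cont U 0). apply (sm_pd1 _ (sm_pd2 _ Hf)). auto.
  - apply continuity_2d_pt_ext_loc with (pd2 (pd1 f)).
    + exists d. intros u v Hu Hv. symmetry; apply E2, Hd; auto.
    + apply (Ck_cont U 0). apply (sm_pd2 _ (sm_pd1 _ Hf)). auto. Qed.

Lemma schwarzV F s t : smoothV_on U F -> U s t -> pd1V (pd2V F) s t = pd2V (pd1V F) s t.
Proof. intros [H1 [H2 [H3 H4]]] Hst. unfold pd1V, pd2V; simpl. f_equal; apply schwarz; auto. Qed.
End Sm.

Unset Default Proof Using.

Lemma mink_sym a b : mink a b = mink b a. Proof. unfold mink; ring. Qed.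
Lemma mink_addl a b c : mink (vadd a b) c = mink a c + mink b c. Proof. unfold mink, vadd; simpl; ring. Qed.
Lemma mink_addr a b c : mink c (vadd a b) = mink c a + mink c b. Proof. unfold mink, vadd; simpl; ring. Qed.
Lemma mink_scall k a c : mink (vscal k a) c = k * mink a c. Proof. unfold mink, vscal; simpl; ring. Qed.
Lemma mink_scalr k a c : mink c (vscal k a) = k * mink c a. Proof. unfold mink, vscal; simpl; ring. Qed.
Lemma mink_subl a b c : mink (vsub a b) c = mink a c - mink b c. Proof. unfold mink, vsub, vadd, vscal; simpl; ring. Qed.
Lemma mink_subr a b c : mink c (vsub a b) = mink c a - mink c b. Proof. unfold mink, vsub, vadd, vscal; simpl; ring. Qed.
Lemma mink_zerol c : mink vzero c = 0. Proof. unfold mink; simpl; ring. Qed.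
Lemma mink_zeror c : mink c vzero = 0. Proof. unfold mink; simpl; ring. Qed.
Ltac mexp_in H := repeat rewrite ?mink_addl, ?mink_addr, ?mink_scall, ?mink_scalr, ?mink_subl, ?mink_subr, ?mink_zerol, ?mink_zeror in H.
Ltac mexp := repeat rewrite ?mink_addl, ?mink_addr, ?mink_scall, ?mink_scalr, ?mink_subl, ?mink_subr, ?mink_zerol, ?mink_zeror.

Lemma V4_ext (a b : V4) : x1 a = x1 b -> x2 a = x2 b -> x3 a = x3 b -> x4 a = x4 b -> a = b.
Proof. destruct a, b; simpl; intros; subst; reflexivity. Qed.
Ltac vext := apply V4_ext; simpl.

Section Pt.
Variable X : R -> R -> V4.
Variables s t : R.
Hypothesis Hg : gdet X s t <> 0.

Lemma tan_mink1 v : mink (tanpart X s t v) (Xs X s t) = mink v (Xs X s t).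
Proof. unfold tanpart, tvec, tan_coef1, tan_coef2. mexp.
  unfold gdet, g11, g12, g22 in *. rewrite ?(mink_sym (Xt X s t) (Xs X s t)). field; auto. Qed.
Lemma tan_mink2 v : mink (tanpart X s t v) (Xt X s t) = mink v (Xt X s t).
Proof. unfold tanpart, tvec, tan_coef1, tan_coef2. mexp.
  unfold gdet, g11, g12, g22 in *. rewrite ?(mink_sym (Xt X s t) (Xs X s t)). field; auto. Qed.
Lemma nor_mink1 v : mink (norpart X s t v) (Xs X s t) = 0.
Proof. unfold norpart. rewrite mink_subl, tan_mink1. ring. Qed.
Lemma nor_mink2 v : mink (norpart X s t v) (Xt X s t) = 0.
Proof. unfold norpart. rewrite mink_subl, tan_mink2. ring. Qed.
End Pt.

Lemma decomp X s t v : v = vadd (tanpart X s t v) (norpart X s t v).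
Proof. unfold norpart, vsub. vext; ring. Qed.
Lemma mink_tvec X s t v a b : mink v (tvec X s t a b) = a * mink v (Xs X s t) + b * mink v (Xt X s t).
Proof. unfold tvec. mexp. ring. Qed.
Lemma normal_mink X s t n v : mink n (Xs X s t) = 0 -> mink n (Xt X s t) = 0 ->
  mink n v = mink n (norpart X s t v).
Proof. intros H1 H2. rewrite (decomp X s t v) at 1. rewrite mink_addr. unfold tanpart at 1.
  rewrite mink_tvec, H1, H2. ring. Qed.

Unset Default Proof Using.

Lemma Biv_ext (a b : Biv) : b12 a = b12 b -> b13 a = b13 b -> b14 a = b14 b ->
  b23 a = b23 b -> b24 a = b24 b -> b34 a = b34 b -> a = b.
Proof. destruct a, b; simpl; intros; subst; reflexivity. Qed.
Ltac bext := apply Biv_ext; simpl.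

Section G.
Variable X : R -> R -> V4.
Variables s t : R.
Hypothesis Htl : gdet X s t < 0.

Lemma mink_tv a1 b1 a2 b2 : mink (tvec X s t a1 b1) (tvec X s t a2 b2) =
  a1 * a2 * g11 X s t + (a1 * b2 + b1 * a2) * g12 X s t + b1 * b2 * g22 X s t.
Proof. unfold tvec, g11, g12, g22. mexp. rewrite (mink_sym (Xt X s t) (Xs X s t)). ring. Qed.

Lemma wedge_tv a1 b1 a2 b2 : wedge (tvec X s t a1 b1) (tvec X s t a2 b2) =
  bscal (a1 * b2 - b1 * a2) (wedge (Xs X s t) (Xt X s t)).
Proof. unfold tvec. bext; ring. Qed.

Lemma po_det a1 b1 a2 b2 : pos_orthonormal X s t a1 b1 a2 b2 ->
  a1 * b2 - b1 * a2 = / sqrt (- gdet X s t).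
Proof. intros [H1 [H2 [H3 H4]]]. rewrite !mink_tv in *.
  set (d := a1 * b2 - b1 * a2) in *.
  assert (E : d * d * gdet X s t =
    (a1 * a1 * g11 X s t + (a1 * b1 + b1 * a1) * g12 X s t + b1 * b1 * g22 X s t) *
    (a2 * a2 * g11 X s t + (a2 * b2 + b2 * a2) * g12 X s t + b2 * b2 * g22 X s t) -
    (a1 * a2 * g11 X s t + (a1 * b2 + b1 * a2) * g12 X s t + b1 * b2 * g22 X s t)^2)
   by (unfold d, gdet; ring).
  rewrite H3 in E.
  set (m1 := a1 * a1 * g11 X s t + (a1 * b1 + b1 * a1) * g12 X s t + b1 * b1 * g22 X s t) in *.
  set (m2 := a2 * a2 * g11 X s t + (a2 * b2 + b2 * a2) * g12 X s t + b2 * b2 * g22 X s t) in *.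
  assert (Hm : m1 * m2 = -1).
  { revert H1 H2 E. unfold Rabs. destruct (Rcase_abs m1), (Rcase_abs m2); intros; try nra. }
  assert (Hd2 : d * d = / (- gdet X s t)) by (field_simplify_eq; nra).
  assert (Hs : 0 < sqrt (- gdet X s t)) by (apply sqrt_lt_R0; lra).
  assert (Hss := sqrt_sqrt (- gdet X s t) ltac:(lra)).
  apply Rsqr_inj. lra. left; apply Rinv_0_lt_compat; lra.
  unfold Rsqr. rewrite Hd2. rewrite <- Hss at 1. field. lra. Qed.

Lemma po_exists : exists a1 b1 a2 b2, pos_orthonormal X s t a1 b1 a2 b2.
Proof.
  set (G11 := g11 X s t). set (G12 := g12 X s t). set (G22 := g22 X s t).
  assert (Hgd : G11 * G22 - G12 * G12 < 0) by exact Htl.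
  assert (Ew : exists w1 w2, w1 * w1 * G11 + (w1 * w2 + w2 * w1) * G12 + w2 * w2 * G22 <> 0).
  { destruct (Req_dec G11 0).
    - destruct (Req_dec G22 0).
      + exists 1, 1. rewrite H, H0 in *. intro. nra.
      + exists 0, 1. intro; apply H0. nra.
    - exists 1, 0. intro; apply H. nra. }
  destruct Ew as [w1 [w2 Hq]].
  set (q := w1 * w1 * G11 + (w1 * w2 + w2 * w1) * G12 + w2 * w2 * G22) in *.
  set (p1 := G11 * w1 + G12 * w2). set (p2 := G12 * w1 + G22 * w2).
  set (v1 := - p2). set (v2 := p1).
  assert (Qv : v1 * v1 * G11 + (v1 * v2 + v2 * v1) * G12 + v2 * v2 * G22 = (G11 * G22 - G12 * G12) * q)
    by (unfold v1, v2, p1, p2, q; ring).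
  assert (Ov : w1 * v1 * G11 + (w1 * v2 + w2 * v1) * G12 + w2 * v2 * G22 = 0)
    by (unfold v1, v2, p1, p2; ring).
  assert (Dv : w1 * v2 - w2 * v1 = q) by (unfold v1, v2, p1, p2, q; ring).
  set (Q2 := (G11 * G22 - G12 * G12) * q) in *.
  assert (Hq2 : Q2 <> 0) by (unfold Q2; intro; apply Rmult_integral in H; lra).
  assert (r1p : 0 < sqrt (Rabs q)) by (apply sqrt_lt_R0; apply Rabs_pos_lt; auto).
  assert (r2p : 0 < sqrt (Rabs Q2)) by (apply sqrt_lt_R0; apply Rabs_pos_lt; auto).
  assert (r1s := sqrt_sqrt (Rabs q) (Rabs_pos q)).
  assert (r2s := sqrt_sqrt (Rabs Q2) (Rabs_pos Q2)).
  set (r1 := sqrt (Rabs q)) in *. set (r2 := sqrt (Rabs Q2)) in *.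
  set (sg := if Rlt_dec 0 q then 1 else -1).
  assert (sgq : 0 < sg * q) by (unfold sg; destruct (Rlt_dec 0 q); lra).
  assert (sg2 : sg * sg = 1) by (unfold sg; destruct (Rlt_dec 0 q); lra).
  exists (w1 / r1), (w2 / r1), (sg * v1 / r2), (sg * v2 / r2).
  unfold pos_orthonormal. rewrite !mink_tv. fold G11 G12 G22.
  split; [|split; [|split]].
  - replace (w1 / r1 * (w1 / r1) * G11 + (w1 / r1 * (w2 / r1) + w2 / r1 * (w1 / r1)) * G12 +
      w2 / r1 * (w2 / r1) * G22) with (q / (r1 * r1)) by (unfold q; field; lra).
    rewrite r1s. unfold Rdiv. rewrite Rabs_mult, Rabs_inv, Rabs_Rabsolu. field. apply Rabs_no_R0; auto.
  - replace (sg * v1 / r2 * (sg * v1 / r2) * G11 + (sg * v1 / r2 * (sg * v2 / r2) + sg * v2 / r2 * (sg * v1 / r2)) * G12 +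
      sg * v2 / r2 * (sg * v2 / r2) * G22) with ((sg * sg) * (v1 * v1 * G11 + (v1 * v2 + v2 * v1) * G12 + v2 * v2 * G22) / (r2 * r2))
      by (field; lra).
    rewrite Qv, r2s, sg2. unfold Rdiv. rewrite Rabs_mult, Rabs_inv, Rabs_Rabsolu, Rmult_1_l. field. apply Rabs_no_R0; auto.
  - replace (w1 / r1 * (sg * v1 / r2) * G11 + (w1 / r1 * (sg * v2 / r2) + w2 / r1 * (sg * v1 / r2)) * G12 +
      w2 / r1 * (sg * v2 / r2) * G22) with (sg * (w1 * v1 * G11 + (w1 * v2 + w2 * v1) * G12 + w2 * v2 * G22) / (r1 * r2))
      by (field; lra).
    rewrite Ov. unfold Rdiv; ring.
  - replace (w1 / r1 * (sg * v2 / r2) - w2 / r1 * (sg * v1 / r2)) with (sg * (w1 * v2 - w2 * v1) / (r1 * r2))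
      by (field; lra).
    rewrite Dv. apply Rlt_gt. unfold Rdiv. apply Rmult_lt_0_compat; auto.
    apply Rinv_0_lt_compat, Rmult_lt_0_compat; auto. Qed.

Lemma Gauss_closed : Gauss X s t = bscal (/ sqrt (- gdet X s t)) (wedge (Xs X s t) (Xt X s t)).
Proof. unfold Gauss.
  assert (E : exists w, exists a1 b1 a2 b2, pos_orthonormal X s t a1 b1 a2 b2 /\
      w = wedge (tvec X s t a1 b1) (tvec X s t a2 b2)).
  { destruct po_exists as [a1 [b1 [a2 [b2 H]]]]. eexists; exists a1, b1, a2, b2; split; eauto. }
  destruct (epsilon_spec (inhabits bzero) _ E) as [a1 [b1 [a2 [b2 [H1 H2]]]]].
  rewrite H2, wedge_tv, (po_det _ _ _ _ H1). reflexivity. Qed.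
End G.

Set Default Proof Using "All".

Definition Db (F : R -> Biv) x (L : Biv) : Prop :=
  is_derive (fun y => b12 (F y)) x (b12 L) /\ is_derive (fun y => b13 (F y)) x (b13 L) /\
  is_derive (fun y => b14 (F y)) x (b14 L) /\ is_derive (fun y => b23 (F y)) x (b23 L) /\
  is_derive (fun y => b24 (F y)) x (b24 L) /\ is_derive (fun y => b34 (F y)) x (b34 L).

Lemma Biv_eta (v : Biv) : v = mkBiv (b12 v) (b13 v) (b14 v) (b23 v) (b24 v) (b34 v).
Proof. destruct v; reflexivity. Qed.
Lemma pd1B_eq F s t L : Db (fun x => F x t) s L -> pd1B F s t = L.
Proof. intros [F1 [F2 [F3 [F4 [F5 F6]]]]]. unfold pd1B. rewrite (Biv_eta L).
  f_equal; apply pd1_eq; assumption. Qed.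
Lemma pd2B_eq F s t L : Db (fun y => F s y) t L -> pd2B F s t = L.
Proof. intros [F1 [F2 [F3 [F4 [F5 F6]]]]]. unfold pd2B. rewrite (Biv_eta L).
  f_equal; apply pd2_eq; assumption. Qed.
Lemma Db_ext F G x L : locally x (fun y => F y = G y) -> Db F x L -> Db G x L.
Proof. intros E [F1 [F2 [F3 [F4 [F5 F6]]]]].
  split; [|split; [|split; [|split; [|split]]]]; eapply Dext; try eassumption;
  destruct E as [d Hd]; exists d; intros y Hy; rewrite (Hd y Hy); reflexivity. Qed.

Lemma Db_val F x L L' : Db F x L -> L = L' -> Db F x L'.
Proof. intros H <-; exact H. Qed.

Lemma Dcomp_w (E F : R -> V4) x i j k l (Li Lj Lk Ll : R) :
  is_derive (fun y => i (E y)) x Li -> is_derive (fun y => j (F y)) x Lj ->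
  is_derive (fun y => k (E y)) x Lk -> is_derive (fun y => l (F y)) x Ll ->
  is_derive (fun y => i (E y) * j (F y) - k (E y) * l (F y)) x
    (Li * j (F x) + i (E x) * Lj - (Lk * l (F x) + k (E x) * Ll)).
Proof. intros. apply Dminus; apply Dmult; auto. Qed.

Lemma Db_sw (phi : R -> R) (E F : R -> V4) x p' E' F' :
  is_derive phi x p' -> Dv E x E' -> Dv F x F' ->
  Db (fun y => bscal (phi y) (wedge (E y) (F y))) x
     (badd (bscal p' (wedge (E x) (F x))) (bscal (phi x) (badd (wedge E' (F x)) (wedge (E x) F')))).
Proof. intros Hp [E1 [E2 [E3 E4]]] [F1 [F2 [F3 F4]]].
  split; [|split; [|split; [|split; [|split]]]]; simpl;
  (eapply Dval; [apply Dmult; [exact Hp | apply Dcomp_w; eassumption] | simpl; ring]). Qed.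

Section GD.
Variable U : R -> R -> Prop.
Variable X : R -> R -> V4.
Hypothesis HU : open2 U.
Hypothesis HX : smoothV_on U X.
Hypothesis Htl : forall s t, U s t -> gdet X s t < 0.

Definition phi s t := / sqrt (- gdet X s t).

Lemma smX1 : smoothV_on U (pd1V X). Proof. apply smV_pd1; auto. Qed.
Lemma smX2 : smoothV_on U (pd2V X). Proof. apply smV_pd2; auto. Qed.

Lemma D_gdet1 s t : U s t -> is_derive (fun x => gdet X x t) s
  (let e1 := Xs X s t in let e2 := Xt X s t in
   let a := pd1V (pd1V X) s t in let b := pd1V (pd2V X) s t in
   (mink a e1 + mink e1 a) * g22 X s t + g11 X s t * (mink b e2 + mink e2 b)
   - ((mink a e2 + mink e1 b) * g12 X s t + g12 X s t * (mink a e2 + mink e1 b))).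
Proof. intros Hst. unfold gdet, g11, g12, g22. simpl.
  assert (D1 := smV_d1 U HU _ s t smX1 Hst). assert (D2 := smV_d1 U HU _ s t smX2 Hst).
  pose proof (Dminus _ _ _ _ _ (Dmult _ _ _ _ _ (Dv_mink _ _ _ _ _ D1 D1) (Dv_mink _ _ _ _ _ D2 D2))
     (Dmult _ _ _ _ _ (Dv_mink _ _ _ _ _ D1 D2) (Dv_mink _ _ _ _ _ D1 D2))) as H.
  eapply Dval; [eapply Dext_all; [exact H | intros; reflexivity] | reflexivity]. Qed.

Lemma D_gdet2 s t : U s t -> is_derive (fun y => gdet X s y) t
  (let e1 := Xs X s t in let e2 := Xt X s t in
   let a := pd2V (pd1V X) s t in let b := pd2V (pd2V X) s t in
   (mink a e1 + mink e1 a) * g22 X s t + g11 X s t * (mink b e2 + mink e2 b)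
   - ((mink a e2 + mink e1 b) * g12 X s t + g12 X s t * (mink a e2 + mink e1 b))).
Proof. intros Hst. unfold gdet, g11, g12, g22. simpl.
  assert (D1 := smV_d2 U HU _ s t smX1 Hst). assert (D2 := smV_d2 U HU _ s t smX2 Hst).
  pose proof (Dminus _ _ _ _ _ (Dmult _ _ _ _ _ (Dv_mink _ _ _ _ _ D1 D1) (Dv_mink _ _ _ _ _ D2 D2))
     (Dmult _ _ _ _ _ (Dv_mink _ _ _ _ _ D1 D2) (Dv_mink _ _ _ _ _ D1 D2))) as H.
  eapply Dval; [eapply Dext_all; [exact H | intros; reflexivity] | reflexivity]. Qed.

Lemma D_phi (h : R -> R) x dh : is_derive h x dh -> h x < 0 ->
  is_derive (fun y => / sqrt (- h y)) x (- (- dh * / (2 * sqrt (- h x))) / (sqrt (- h x) * sqrt (- h x))).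
Proof. intros H Hn.
  assert (H1 : is_derive (fun y => - h y) x (- dh)).
  { apply (Dval _ _ (0 - dh)). apply (Dext_all (fun y => 0 - h y)). apply Dminus; [apply Dconst|exact H].
    intros; ring. toR; ring. }
  assert (H2 := Dsqrt (fun y => - h y) x (- dh) H1 ltac:(lra)).
  assert (Hs: sqrt (- h x) <> 0) by (apply Rgt_not_eq, sqrt_lt_R0; lra).
  exact (Dinv (fun y => sqrt (- h y)) x _ H2 Hs). Qed.

Lemma Gauss_loc1 s t : U s t -> locally s (fun x => bscal (phi x t) (wedge (Xs X x t) (Xt X x t)) = Gauss X x t).
Proof. intros Hst. destruct (open_loc1 U HU s t Hst) as [d Hd]. exists d. intros y Hy.
  symmetry; apply Gauss_closed, Htl, Hd, Hy. Qed.
Lemma Gauss_loc2 s t : U s t -> locally t (fun y => bscal (phi s y) (wedge (Xs X s y) (Xt X s y)) = Gauss X s y).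
Proof. intros Hst. destruct (open_loc2 U HU s t Hst) as [d Hd]. exists d. intros y Hy.
  symmetry; apply Gauss_closed, Htl, Hd, Hy. Qed.

Lemma pd1G s t : U s t -> pd1B (Gauss X) s t =
  bscal (phi s t) (badd (wedge (N11 X s t) (Xt X s t)) (wedge (Xs X s t) (N12 X s t))).
Proof. intros Hst. apply pd1B_eq. eapply Db_ext. apply Gauss_loc1; auto.
  eapply Db_val. apply (Db_sw (fun x => phi x t) (fun x => Xs X x t) (fun x => Xt X x t)).
  - apply D_phi. apply D_gdet1; auto. apply Htl; auto.
  - apply (smV_d1 U HU _ s t smX1 Hst).
  - apply (smV_d1 U HU _ s t smX2 Hst).
  - rewrite (schwarzV U HU X s t HX Hst). cbv zeta.
    set (e1 := Xs X s t). set (e2 := Xt X s t). set (a := pd1V (pd1V X) s t). set (b := pd2V (pd1V X) s t).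
    assert (Hg := Htl s t Hst).
    assert (Hrs : 0 < sqrt (- gdet X s t)) by (apply sqrt_lt_R0; lra).
    assert (Hss := sqrt_sqrt (- gdet X s t) ltac:(lra)).
    set (rs := sqrt (- gdet X s t)) in *.
    set (c1 := tan_coef1 X s t a). set (c2 := tan_coef2 X s t b).
    assert (Hp : - (- ((mink a e1 + mink e1 a) * g22 X s t + g11 X s t * (mink b e2 + mink e2 b) -
          ((mink a e2 + mink e1 b) * g12 X s t + g12 X s t * (mink a e2 + mink e1 b))) * / (2 * rs)) /
          (rs * rs) = - phi s t * (c1 + c2)).
    { unfold phi, c1, c2, tan_coef1, tan_coef2. fold rs e1 e2. rewrite Hss.
      rewrite (mink_sym e1 a), (mink_sym e2 b), (mink_sym e1 b).
      unfold gdet, g11, g12, g22 in *. fold e1 e2 in Hg, Hss |- *. field. split; lra. }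
    rewrite Hp. unfold N11, N12, norpart, tanpart, tvec, vsub. fold e1 e2 a b c1 c2.
    bext; ring.
Qed.
Lemma pd2G s t : U s t -> pd2B (Gauss X) s t =
  bscal (phi s t) (badd (wedge (N12 X s t) (Xt X s t)) (wedge (Xs X s t) (N22 X s t))).
Proof. intros Hst. apply pd2B_eq. eapply Db_ext. apply Gauss_loc2; auto.
  eapply Db_val. apply (Db_sw (fun y => phi s y) (fun y => Xs X s y) (fun y => Xt X s y)).
  - apply D_phi. apply D_gdet2; auto. apply Htl; auto.
  - apply (smV_d2 U HU _ s t smX1 Hst).
  - apply (smV_d2 U HU _ s t smX2 Hst).
  - cbv zeta.
    set (e1 := Xs X s t). set (e2 := Xt X s t). set (a := pd2V (pd1V X) s t). set (b := pd2V (pd2V X) s t).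
    assert (Hg := Htl s t Hst).
    assert (Hrs : 0 < sqrt (- gdet X s t)) by (apply sqrt_lt_R0; lra).
    assert (Hss := sqrt_sqrt (- gdet X s t) ltac:(lra)).
    set (rs := sqrt (- gdet X s t)) in *.
    set (c1 := tan_coef1 X s t a). set (c2 := tan_coef2 X s t b).
    assert (Hp : - (- ((mink a e1 + mink e1 a) * g22 X s t + g11 X s t * (mink b e2 + mink e2 b) -
          ((mink a e2 + mink e1 b) * g12 X s t + g12 X s t * (mink a e2 + mink e1 b))) * / (2 * rs)) /
          (rs * rs) = - phi s t * (c1 + c2)).
    { unfold phi, c1, c2, tan_coef1, tan_coef2. fold rs e1 e2. rewrite Hss.
      rewrite (mink_sym e1 a), (mink_sym e2 b), (mink_sym e1 b).
      unfold gdet, g11, g12, g22 in *. fold e1 e2 in Hg, Hss |- *. field. split; lra. }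
    rewrite Hp. unfold N12, N22, norpart, tanpart, tvec, vsub. fold e1 e2 a b c1 c2.
    bext; ring.
Qed.

Definition KK s t (a b : R) : Biv :=
  badd (wedge (vadd (vscal a (N11 X s t)) (vscal b (N12 X s t))) (Xt X s t))
       (wedge (Xs X s t) (vadd (vscal a (N12 X s t)) (vscal b (N22 X s t)))).

Lemma GstarH_eq s t a b : U s t -> GstarH X s t a b =
  (phi s t * phi s t * bivmet (KK s t a b) (KK s t a b), phi s t * phi s t * bivwedge (KK s t a b) (KK s t a b)).
Proof. intros Hst. unfold GstarH, dGauss, Hform. rewrite pd1G, pd2G; auto.
  assert (E : badd (bscal a (bscal (phi s t) (badd (wedge (N11 X s t) (Xt X s t)) (wedge (Xs X s t) (N12 X s t)))))
     (bscal b (bscal (phi s t) (badd (wedge (N12 X s t) (Xt X s t)) (wedge (Xs X s t) (N22 X s t))))) =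
     bscal (phi s t) (KK s t a b)) by (unfold KK; bext; ring).
  rewrite E. f_equal; unfold bivmet, bivwedge; simpl; ring. Qed.
End GD.

Set Default Proof Using "All".

Lemma Dv_sub F G x L M : Dv F x L -> Dv G x M -> Dv (fun y => vsub (F y) (G y)) x (vsub L M).
Proof. intros HF HG. unfold vsub. apply Dv_add; auto.
  eapply Dv_val. apply Dv_scal. apply Dconst. exact HG. vext; ring. Qed.

Definition tcf1 X s t m1 m2 := (g22 X s t * m1 - g12 X s t * m2) / gdet X s t.
Definition tcf2 X s t m1 m2 := (- g12 X s t * m1 + g11 X s t * m2) / gdet X s t.
Definition Ric X s t v :=
  vsub (vadd (vscal (tcf1 X s t (- mink v (N11 X s t)) (- mink v (N12 X s t))) (N12 X s t))
             (vscal (tcf2 X s t (- mink v (N11 X s t)) (- mink v (N12 X s t))) (N22 X s t)))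
       (vadd (vscal (tcf1 X s t (- mink v (N12 X s t)) (- mink v (N22 X s t))) (N11 X s t))
             (vscal (tcf2 X s t (- mink v (N12 X s t)) (- mink v (N22 X s t))) (N12 X s t))).

Lemma nor_lin X s t A p q Y r w Z : gdet X s t <> 0 ->
  norpart X s t (vsub A (vadd (vadd (vscal p (Xs X s t)) (vscal q Y)) (vadd (vscal r (Xt X s t)) (vscal w Z))))
  = vsub (norpart X s t A) (vadd (vscal q (norpart X s t Y)) (vscal w (norpart X s t Z))).
Proof. intros H. unfold norpart, tanpart, tvec, tan_coef1, tan_coef2. mexp.
  unfold gdet, g11, g12, g22 in *. rewrite ?(mink_sym (Xt X s t) (Xs X s t)).
  set (e1 := Xs X s t) in *. set (e2 := Xt X s t) in *.
  vext; field; auto. Qed.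

Section W.
Variable U : R -> R -> Prop.
Variable X : R -> R -> V4.
Hypothesis HU : open2 U.
Hypothesis HX : smoothV_on U X.
Hypothesis Htl : forall s t, U s t -> gdet X s t < 0.

Lemma sX1 : smoothV_on U (Xs X). Proof. exact (smX1 U X HU HX Htl). Qed.
Lemma sX2 : smoothV_on U (Xt X). Proof. exact (smX2 U X HU HX Htl). Qed.
Lemma sm_g11 : smooth_on U (g11 X). Proof. apply (sm_mink U HU); apply sX1. Qed.
Lemma sm_g12 : smooth_on U (g12 X). Proof. apply (sm_mink U HU); [apply sX1|apply sX2]. Qed.
Lemma sm_g22 : smooth_on U (g22 X). Proof. apply (sm_mink U HU); apply sX2. Qed.
Lemma sm_gdet : smooth_on U (gdet X).
Proof. unfold gdet. apply (sm_minus U HU); apply (sm_mult U HU); auto using sm_g11, sm_g12, sm_g22. Qed.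

Lemma sm_tc1 V : smoothV_on U V -> smooth_on U (fun s t => tan_coef1 X s t (V s t)).
Proof. intros HV. unfold tan_coef1. apply (sm_div U HU); auto.
  intros s t Hst; specialize (Htl s t Hst); lra.
  apply (sm_minus U HU); apply (sm_mult U HU); auto using sm_g22, sm_g12; apply (sm_mink U HU); auto using sX1, sX2.
  apply sm_gdet. Qed.
Lemma sm_tc2 V : smoothV_on U V -> smooth_on U (fun s t => tan_coef2 X s t (V s t)).
Proof. intros HV. unfold tan_coef2. apply (sm_div U HU); auto.
  intros s t Hst; specialize (Htl s t Hst); lra.
  apply (sm_plus U HU). apply (sm_mult U HU). apply (sm_opp U HU), sm_g12. apply (sm_mink U HU); auto using sX1.
  apply (sm_mult U HU); auto using sm_g11; apply (sm_mink U HU); auto using sX2.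
  apply sm_gdet. Qed.
Lemma smV_tan V : smoothV_on U V -> smoothV_on U (fun s t => tanpart X s t (V s t)).
Proof. intros HV. unfold tanpart, tvec. apply (smV_add U HU); apply (smV_scal U HU); auto using sm_tc1, sm_tc2, smX1, smX2. Qed.
Lemma smV_nor V : smoothV_on U V -> smoothV_on U (fun s t => norpart X s t (V s t)).
Proof. intros HV. unfold norpart. apply (smV_sub U HU); auto using smV_tan. Qed.

Lemma D_zero (f : R -> R) x l : locally x (fun y => f y = 0) -> is_derive f x l -> l = 0.
Proof. intros E H. apply (Dunique f x). exact H. eapply Dext. 2: apply (Dconst 0 x).
  destruct E as [d Hd]. exists d. intros y Hy. symmetry. apply Hd; auto. Qed.

Definition isnormal (xi : R -> R -> V4) := forall s t, U s t -> mink (xi s t) (Xs X s t) = 0 /\ mink (xi s t) (Xt X s t) = 0.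

Section Wg.
Variable xi : R -> R -> V4.
Hypothesis Hxi : smoothV_on U xi.
Hypothesis Hn : isnormal xi.
Variables s t : R.
Hypothesis Hst : U s t.

Lemma Wg11 : mink (pd1V xi s t) (Xs X s t) = - mink (xi s t) (N11 X s t).
Proof. assert (H := Dv_mink _ _ _ _ _ (smV_d1 U HU _ s t Hxi Hst) (smV_d1 U HU _ s t sX1 Hst)).
  apply D_zero in H. unfold N11. rewrite <- normal_mink; try apply Hn; auto. unfold Xs, Xt in *. lra.
  destruct (open_loc1 U HU s t Hst) as [d Hd]. exists d; intros y Hy. apply Hn, Hd, Hy. Qed.
Lemma Wg12 : mink (pd1V xi s t) (Xt X s t) = - mink (xi s t) (N12 X s t).
Proof. assert (H := Dv_mink _ _ _ _ _ (smV_d1 U HU _ s t Hxi Hst) (smV_d1 U HU _ s t sX2 Hst)).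
  apply D_zero in H. unfold N12. rewrite <- normal_mink; try apply Hn; auto.
  unfold Xs, Xt in *. rewrite <- (schwarzV U HU X s t HX Hst). lra.
  destruct (open_loc1 U HU s t Hst) as [d Hd]. exists d; intros y Hy. apply Hn, Hd, Hy. Qed.
Lemma Wg21 : mink (pd2V xi s t) (Xs X s t) = - mink (xi s t) (N12 X s t).
Proof. assert (H := Dv_mink _ _ _ _ _ (smV_d2 U HU _ s t Hxi Hst) (smV_d2 U HU _ s t sX1 Hst)).
  apply D_zero in H. unfold N12. rewrite <- normal_mink; try apply Hn; auto. unfold Xs, Xt in *. lra.
  destruct (open_loc2 U HU s t Hst) as [d Hd]. exists d; intros y Hy. apply Hn, Hd, Hy. Qed.
Lemma Wg22 : mink (pd2V xi s t) (Xt X s t) = - mink (xi s t) (N22 X s t).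
Proof. assert (H := Dv_mink _ _ _ _ _ (smV_d2 U HU _ s t Hxi Hst) (smV_d2 U HU _ s t sX2 Hst)).
  apply D_zero in H. unfold N22. rewrite <- normal_mink; try apply Hn; auto. unfold Xs, Xt in *. lra.
  destruct (open_loc2 U HU s t Hst) as [d Hd]. exists d; intros y Hy. apply Hn, Hd, Hy. Qed.

Let ct1 := fun s t => tan_coef1 X s t (pd2V xi s t).
Let ct2 := fun s t => tan_coef2 X s t (pd2V xi s t).
Let cs1 := fun s t => tan_coef1 X s t (pd1V xi s t).
Let cs2 := fun s t => tan_coef2 X s t (pd1V xi s t).

Lemma Ricci : Rperp X xi s t = Ric X s t (xi s t).
Proof.
  assert (E1 : pd1V (nabla2 X xi) s t = vsub (pd1V (pd2V xi) s t)
     (vadd (vadd (vscal (pd1 ct1 s t) (Xs X s t)) (vscal (ct1 s t) (pd1V (Xs X) s t)))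
           (vadd (vscal (pd1 ct2 s t) (Xt X s t)) (vscal (ct2 s t) (pd1V (Xt X) s t))))).
  { apply pd1V_eq. unfold nabla2, norpart, tanpart, tvec. apply Dv_sub.
    apply (smV_d1 U HU _ s t (smV_pd2 U HU _ Hxi) Hst).
    apply (Dv_add (fun x => vscal (ct1 x t) (Xs X x t)) (fun x => vscal (ct2 x t) (Xt X x t)));
      [apply (Dv_scal (fun x => ct1 x t) (fun x => Xs X x t)) | apply (Dv_scal (fun x => ct2 x t) (fun x => Xt X x t))].
    - apply (sm_d1 U HU ct1 s t); auto. apply sm_tc1. apply (smV_pd2 U HU _ Hxi).
    - apply (smV_d1 U HU _ s t sX1 Hst).
    - apply (sm_d1 U HU ct2 s t); auto. apply sm_tc2. apply (smV_pd2 U HU _ Hxi).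
    - apply (smV_d1 U HU _ s t sX2 Hst). }
  assert (E2 : pd2V (nabla1 X xi) s t = vsub (pd2V (pd1V xi) s t)
     (vadd (vadd (vscal (pd2 cs1 s t) (Xs X s t)) (vscal (cs1 s t) (pd2V (Xs X) s t)))
           (vadd (vscal (pd2 cs2 s t) (Xt X s t)) (vscal (cs2 s t) (pd2V (Xt X) s t))))).
  { apply pd2V_eq. unfold nabla1, norpart, tanpart, tvec. apply Dv_sub.
    apply (smV_d2 U HU _ s t (smV_pd1 U HU _ Hxi) Hst).
    apply (Dv_add (fun y => vscal (cs1 s y) (Xs X s y)) (fun y => vscal (cs2 s y) (Xt X s y)));
      [apply (Dv_scal (fun y => cs1 s y) (fun y => Xs X s y)) | apply (Dv_scal (fun y => cs2 s y) (fun y => Xt X s y))].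
    - apply (sm_d2 U HU cs1 s t); auto. apply sm_tc1. apply (smV_pd1 U HU _ Hxi).
    - apply (smV_d2 U HU _ s t sX1 Hst).
    - apply (sm_d2 U HU cs2 s t); auto. apply sm_tc2. apply (smV_pd1 U HU _ Hxi).
    - apply (smV_d2 U HU _ s t sX2 Hst). }
  assert (Hg : gdet X s t <> 0) by (specialize (Htl s t Hst); lra).
  change (Rperp X xi s t) with (vsub (norpart X s t (pd1V (nabla2 X xi) s t)) (norpart X s t (pd2V (nabla1 X xi) s t))).
  rewrite E1, E2, !nor_lin; auto.
  rewrite (schwarzV U HU xi s t Hxi Hst).
  unfold Xs, Xt. rewrite (schwarzV U HU X s t HX Hst).
  fold (N11 X s t) (N12 X s t) (N22 X s t).
  unfold Ric, ct1, ct2, cs1, cs2, tan_coef1, tan_coef2, tcf1, tcf2.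
  rewrite Wg11, Wg12, Wg21, Wg22.
  vext; ring. Qed.
End Wg.
End W.

Set Default Proof Using "All".

Lemma sq3 a b c : 0 <= a*a+b*b+c*c. Proof. nra. Qed.

Lemma pos_normal (T v : V4) : mink T T < 0 -> mink v T = 0 ->
  0 <= mink v v /\ (mink v v = 0 -> v = vzero).
Proof. destruct T as [t1 t2 t3 t4], v as [v1 v2 v3 v4]. unfold mink; simpl. intros HT Hv.
  set (St := t2*t2+t3*t3+t4*t4) in *. set (Sv := v2*v2+v3*v3+v4*v4).
  assert (CS : (v2*t2+v3*t3+v4*t4)^2 <= Sv * St).
  { assert (E : Sv * St - (v2*t2+v3*t3+v4*t4)^2 = (v2*t3-v3*t2)^2 + (v2*t4-v4*t2)^2 + (v3*t4-v4*t3)^2)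
      by (unfold Sv, St; ring).
    assert (0 <= (v2*t3-v3*t2)^2) by apply pow2_ge_0. assert (0 <= (v2*t4-v4*t2)^2) by apply pow2_ge_0.
    assert (0 <= (v3*t4-v4*t3)^2) by apply pow2_ge_0. lra. }
  assert (E1 : v1 * t1 = v2*t2+v3*t3+v4*t4) by lra.
  assert (Svp : 0 <= Sv) by apply sq3.
  assert (Stp : 0 <= St) by apply sq3.
  assert (t1p : St < t1 * t1) by (unfold St; lra).
  assert (K : v1 * v1 * (t1 * t1) <= Sv * (t1 * t1)).
  { rewrite <- E1 in CS. assert (Sv * St <= Sv * (t1 * t1)) by nra. nra. }
  assert (K2 : v1 * v1 <= Sv) by nra.
  split. unfold Sv in K2; lra.
  intros H0. assert (Hv1 : v1 * v1 = Sv) by (unfold Sv; lra).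
  assert (v1 = 0).
  { rewrite <- E1, <- Hv1 in CS. assert (v1 * v1 * (t1 * t1 - St) <= 0) by nra.
    assert (v1 * v1 <= 0) by nra. nra. }
  subst v1. unfold Sv in Hv1. unfold vzero.
  assert (v2 = 0) by nra. assert (v3 = 0) by nra. assert (v4 = 0) by nra. subst; reflexivity. Qed.

Definition det4 (a b c d : V4) : R := bivwedge (wedge a b) (wedge c d).
Definition det3 a11 a12 a13 a21 a22 a23 a31 a32 a33 :=
  a11*(a22*a33-a23*a32) - a12*(a21*a33-a23*a31) + a13*(a21*a32-a22*a31).
Definition det4m a11 a12 a13 a14 a21 a22 a23 a24 a31 a32 a33 a34 a41 a42 a43 a44 :=
  a11 * det3 a22 a23 a24 a32 a33 a34 a42 a43 a44
 - a12 * det3 a21 a23 a24 a31 a33 a34 a41 a43 a44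
 + a13 * det3 a21 a22 a24 a31 a32 a34 a41 a42 a44
 - a14 * det3 a21 a22 a23 a31 a32 a33 a41 a42 a43.
Lemma gram a b c d : - (det4 a b c d * det4 a b c d) =
  det4m (mink a a) (mink a b) (mink a c) (mink a d)
        (mink b a) (mink b b) (mink b c) (mink b d)
        (mink c a) (mink c b) (mink c c) (mink c d)
        (mink d a) (mink d b) (mink d c) (mink d d).
Proof. destruct a, b, c, d. unfold det4, det4m, det3, mink, bivwedge, wedge; simpl. ring. Qed.

Definition qf (g11 g12 g22 u1 u2 v1 v2 : R) := u1 * v1 * g11 + (u1 * v2 + u2 * v1) * g12 + u2 * v2 * g22.
Definition IIp (N1 N2 N3 : V4) (u1 u2 v1 v2 : R) : V4 :=
  vadd (vadd (vscal (u1 * v1) N1) (vscal (u1 * v2 + u2 * v1) N2)) (vscal (u2 * v2) N3).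

Section PW.
Variables e1 e2 N1 N2 N3 : V4.
Definition G11 := mink e1 e1.
Definition G12 := mink e1 e2.
Definition G22 := mink e2 e2.
Hypothesis Hg : G11 * G22 - G12 * G12 < 0.
Hypothesis H11 : mink N1 e1 = 0. Hypothesis H12 : mink N1 e2 = 0.
Hypothesis H21 : mink N2 e1 = 0. Hypothesis H22 : mink N2 e2 = 0.
Hypothesis H31 : mink N3 e1 = 0. Hypothesis H32 : mink N3 e2 = 0.
Variables l1 l2 n1 n2 : R.
Hypothesis Hll : qf G11 G12 G22 l1 l2 l1 l2 = 0.
Hypothesis Hnn : qf G11 G12 G22 n1 n2 n1 n2 = 0.
Hypothesis Hln : qf G11 G12 G22 l1 l2 n1 n2 = 1.
Definition dd := l1 * n2 - l2 * n1.

Lemma dd_sq : dd * dd * (G11 * G22 - G12 * G12) = -1.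
Proof. assert (E : dd * dd * (G11 * G22 - G12 * G12) =
   qf G11 G12 G22 l1 l2 l1 l2 * qf G11 G12 G22 n1 n2 n1 n2 - qf G11 G12 G22 l1 l2 n1 n2 ^ 2)
   by (unfold dd, qf; ring). rewrite E, Hll, Hnn, Hln. ring. Qed.
Lemma dd_nz : dd <> 0.
Proof. intro H. assert (E := dd_sq). rewrite H in E. lra. Qed.

Lemma gf11 : dd * dd * G11 = -2 * l2 * n2.
Proof. assert (E : dd * dd * G11 = n2 * n2 * qf G11 G12 G22 l1 l2 l1 l2 - 2 * n2 * l2 * qf G11 G12 G22 l1 l2 n1 n2
   + l2 * l2 * qf G11 G12 G22 n1 n2 n1 n2) by (unfold dd, qf; ring). rewrite E, Hll, Hnn, Hln. ring. Qed.
Lemma gf12 : dd * dd * G12 = l1 * n2 + l2 * n1.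
Proof. assert (E : dd * dd * G12 = - n1 * n2 * qf G11 G12 G22 l1 l2 l1 l2 + (l1 * n2 + l2 * n1) * qf G11 G12 G22 l1 l2 n1 n2
   - l1 * l2 * qf G11 G12 G22 n1 n2 n1 n2) by (unfold dd, qf; ring). rewrite E, Hll, Hnn, Hln. ring. Qed.
Lemma gf22 : dd * dd * G22 = -2 * l1 * n1.
Proof. assert (E : dd * dd * G22 = n1 * n1 * qf G11 G12 G22 l1 l2 l1 l2 - 2 * n1 * l1 * qf G11 G12 G22 l1 l2 n1 n2
   + l1 * l1 * qf G11 G12 G22 n1 n2 n1 n2) by (unfold dd, qf; ring). rewrite E, Hll, Hnn, Hln. ring. Qed.

Definition isnorm (v : V4) := mink v e1 = 0 /\ mink v e2 = 0.
Lemma IIp_norm u1 u2 v1 v2 : isnorm (IIp N1 N2 N3 u1 u2 v1 v2).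
Proof. unfold isnorm, IIp. mexp. rewrite H11, H12, H21, H22, H31, H32. split; ring. Qed.
Lemma lin_norm a b v w : isnorm v -> isnorm w -> isnorm (vadd (vscal a v) (vscal b w)).
Proof. unfold isnorm; intros [] []. mexp. split; nra. Qed.

Definition Tv := vadd (vscal (l1 - n1) e1) (vscal (l2 - n2) e2).
Lemma Tv_tl : mink Tv Tv < 0.
Proof. unfold Tv. mexp. rewrite (mink_sym e2 e1).
  assert (E : (l1 - n1) * ((l1 - n1) * mink e1 e1) + (l1 - n1) * ((l2 - n2) * mink e1 e2) +
    ((l2 - n2) * ((l1 - n1) * mink e1 e2) + (l2 - n2) * ((l2 - n2) * mink e2 e2)) =
    qf G11 G12 G22 l1 l2 l1 l2 - 2 * qf G11 G12 G22 l1 l2 n1 n2 + qf G11 G12 G22 n1 n2 n1 n2)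
    by (unfold qf, G11, G12, G22; ring). rewrite E, Hll, Hnn, Hln. lra. Qed.
Lemma posN v : isnorm v -> 0 <= mink v v /\ (mink v v = 0 -> v = vzero).
Proof. intros [Ha Hb]. apply (pos_normal Tv); auto using Tv_tl. unfold Tv. mexp. rewrite Ha, Hb. ring. Qed.

Lemma PQ P Q : isnorm P -> isnorm Q -> mink P Q = 0 -> det4 e1 e2 P Q = 0 -> P = vzero \/ Q = vzero.
Proof. intros [P1 P2] [Q1 Q2] HPQ Hd.
  assert (E := gram e1 e2 P Q). rewrite Hd in E.
  rewrite (mink_sym e1 P), (mink_sym e2 P), (mink_sym e1 Q), (mink_sym e2 Q), (mink_sym Q P), (mink_sym e2 e1) in E.
  rewrite P1, P2, Q1, Q2, HPQ in E. unfold det4m, det3 in E.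
  assert (E2 : (G11 * G22 - G12 * G12) * (mink P P * mink Q Q) = 0) by (unfold G11, G12, G22; lra).
  apply Rmult_integral in E2. destruct E2 as [E2|E2]; [lra|].
  apply Rmult_integral in E2. destruct E2 as [E2|E2].
  - left. apply posN; [split|]; auto.
  - right. apply posN; [split|]; auto. Qed.

Lemma bm_gen a b x y : bivmet (badd (wedge a y) (wedge x b)) (badd (wedge a y) (wedge x b)) =
  (mink a a * mink y y - mink a y * mink a y) + 2 * (mink a x * mink y b - mink a b * mink y x)
  + (mink x x * mink b b - mink x b * mink x b).
Proof. destruct a, b, x, y; unfold bivmet, mink, wedge, badd; simpl; ring. Qed.
Lemma bw_gen a b x y : bivwedge (badd (wedge a y) (wedge x b)) (badd (wedge a y) (wedge x b)) =
  -2 * det4 x y a b.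
Proof. destruct a, b, x, y; unfold det4, bivwedge, wedge, badd; simpl; ring. Qed.

Definition Av a b := vadd (vscal a N1) (vscal b N2).
Definition Bv a b := vadd (vscal a N2) (vscal b N3).
Definition Kv a b := badd (wedge (Av a b) e2) (wedge e1 (Bv a b)).

Lemma bm_eq a b : bivmet (Kv a b) (Kv a b) =
  G22 * mink (Av a b) (Av a b) - 2 * G12 * mink (Av a b) (Bv a b) + G11 * mink (Bv a b) (Bv a b).
Proof. unfold Kv. rewrite bm_gen.
  destruct (lin_norm a b N1 N2) as [A1 A2]; try split; auto.
  destruct (lin_norm a b N2 N3) as [B1 B2]; try split; auto.
  fold (Av a b) in A1, A2. fold (Bv a b) in B1, B2.
  rewrite (mink_sym e2 (Bv a b)), (mink_sym e1 (Bv a b)), (mink_sym e2 e1), A1, A2, B1, B2.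
  unfold G11, G12, G22. ring. Qed.

Lemma P_eq a b : IIp N1 N2 N3 a b l1 l2 = vadd (vscal l1 (Av a b)) (vscal l2 (Bv a b)).
Proof. unfold IIp, Av, Bv. vext; ring. Qed.
Lemma Q_eq a b : IIp N1 N2 N3 a b n1 n2 = vadd (vscal n1 (Av a b)) (vscal n2 (Bv a b)).
Proof. unfold IIp, Av, Bv. vext; ring. Qed.

Lemma PQ_mink a b : mink (IIp N1 N2 N3 a b l1 l2) (IIp N1 N2 N3 a b n1 n2) =
  - (dd * dd / 2) * bivmet (Kv a b) (Kv a b).
Proof. rewrite P_eq, Q_eq, bm_eq. mexp. rewrite (mink_sym (Bv a b) (Av a b)).
  replace (- (dd * dd / 2) * (G22 * mink (Av a b) (Av a b) - 2 * G12 * mink (Av a b) (Bv a b) + G11 * mink (Bv a b) (Bv a b)))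
   with (- (1/2) * ((dd * dd * G22) * mink (Av a b) (Av a b) - 2 * (dd * dd * G12) * mink (Av a b) (Bv a b)
          + (dd * dd * G11) * mink (Bv a b) (Bv a b))) by field.
  rewrite gf11, gf12, gf22. field. Qed.

Lemma PQ_det a b : det4 e1 e2 (IIp N1 N2 N3 a b l1 l2) (IIp N1 N2 N3 a b n1 n2) =
  dd * det4 e1 e2 (Av a b) (Bv a b).
Proof. rewrite P_eq, Q_eq. unfold dd. destruct (Av a b), (Bv a b), e1, e2.
  unfold det4, bivwedge, wedge, vadd, vscal; simpl; ring. Qed.

Definition al := IIp N1 N2 N3 l1 l2 l1 l2.
Definition be := IIp N1 N2 N3 l1 l2 n1 n2.
Definition ga := IIp N1 N2 N3 n1 n2 n1 n2.

Lemma PA : (forall a b, bivmet (Kv a b) (Kv a b) = 0 /\ bivwedge (Kv a b) (Kv a b) = 0) ->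
  al <> vzero -> be = vzero /\ ga = vzero.
Proof. intros H Ha.
  assert (K : forall a b, IIp N1 N2 N3 a b l1 l2 = vzero \/ IIp N1 N2 N3 a b n1 n2 = vzero).
  { intros a b. destruct (H a b) as [Hm Hw]. apply PQ; try apply IIp_norm.
    rewrite PQ_mink, Hm; ring.
    rewrite PQ_det. unfold Kv in Hw. rewrite bw_gen in Hw. nra. }
  assert (Hb : be = vzero).
  { destruct (K l1 l2) as [E|E]. exfalso; apply Ha; exact E.
    unfold be. exact E. }
  split; auto.
  destruct (K (l1 + n1) (l2 + n2)) as [E|E].
  - exfalso; apply Ha. unfold al. rewrite <- E. unfold be in Hb.
    assert (E2 : IIp N1 N2 N3 (l1 + n1) (l2 + n2) l1 l2 = vadd (IIp N1 N2 N3 l1 l2 l1 l2) (IIp N1 N2 N3 l1 l2 n1 n2))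
      by (unfold IIp; vext; ring).
    rewrite E2, Hb. vext; ring.
  - unfold ga. rewrite <- E. unfold be in Hb.
    assert (E2 : IIp N1 N2 N3 (l1 + n1) (l2 + n2) n1 n2 = vadd (IIp N1 N2 N3 l1 l2 n1 n2) (IIp N1 N2 N3 n1 n2 n1 n2))
      by (unfold IIp; vext; ring).
    rewrite E2, Hb. vext; ring. Qed.

Lemma PB : be = vzero -> ga = vzero ->
  forall a b, bivmet (Kv a b) (Kv a b) = 0 /\ bivwedge (Kv a b) (Kv a b) = 0.
Proof. intros Hb Hc a b.
  assert (HQ : IIp N1 N2 N3 a b n1 n2 = vzero).
  { assert (E : vscal dd (IIp N1 N2 N3 a b n1 n2) =
       vadd (vscal (a * n2 - b * n1) (IIp N1 N2 N3 l1 l2 n1 n2)) (vscal (l1 * b - l2 * a) (IIp N1 N2 N3 n1 n2 n1 n2)))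
      by (unfold IIp, dd; vext; ring).
    unfold be, ga in Hb, Hc. rewrite Hb, Hc in E.
    assert (Hd := dd_nz). destruct (IIp N1 N2 N3 a b n1 n2) as [q1 q2 q3 q4].
    unfold vscal, vadd, vzero in E; simpl in E. injection E; intros.
    unfold vzero. f_equal; nra. }
  split.
  - assert (E := PQ_mink a b). rewrite HQ, mink_zeror in E.
    assert (Hd := dd_nz). assert (0 < dd * dd) by nra. nra.
  - unfold Kv. rewrite bw_gen. assert (E := PQ_det a b). rewrite HQ in E.
    assert (E0 : det4 e1 e2 (IIp N1 N2 N3 a b l1 l2) vzero = 0) by (unfold det4; destruct e1, e2, (IIp N1 N2 N3 a b l1 l2); unfold bivwedge, wedge; simpl; ring).
    rewrite E0 in E. assert (Hd := dd_nz). fold (Av a b) (Bv a b). nra. Qed.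

Lemma Gs : G11 = -2 * l2 * n2 / (dd * dd) /\ G12 = (l1 * n2 + l2 * n1) / (dd * dd) /\ G22 = -2 * l1 * n1 / (dd * dd).
Proof. assert (Hd := dd_nz). split; [|split].
  - rewrite <- gf11. field; auto.
  - rewrite <- gf12. field; auto.
  - rewrite <- gf22. field; auto. Qed.

Lemma PC : vscal (/ 2 * / (G11 * G22 - G12 * G12))
    (vadd (vadd (vscal G22 N1) (vscal (-2 * G12) N2)) (vscal G11 N3)) = be.
Proof. assert (Hd := dd_nz). destruct Gs as [E1 [E2 E3]]. unfold be, IIp.
  rewrite E1, E2, E3. unfold dd in *. vext; field; split; auto; intro; apply Hd; nra. Qed.

Definition tc1 m1 m2 := (G22 * m1 - G12 * m2) / (G11 * G22 - G12 * G12).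
Definition tc2 m1 m2 := (- G12 * m1 + G11 * m2) / (G11 * G22 - G12 * G12).
Definition Ricp v :=
  vsub (vadd (vscal (tc1 (- mink v N1) (- mink v N2)) N2) (vscal (tc2 (- mink v N1) (- mink v N2)) N3))
       (vadd (vscal (tc1 (- mink v N2) (- mink v N3)) N1) (vscal (tc2 (- mink v N2) (- mink v N3)) N2)).

Lemma PD v : vscal dd (Ricp v) = vsub (vscal (mink v ga) al) (vscal (mink v al) ga).
Proof. assert (Hd := dd_nz). unfold Ricp, tc1, tc2, al, ga, IIp. mexp.
  destruct Gs as [E1 [E2 E3]]. rewrite E1, E2, E3. unfold dd in *.
  set (p1 := mink v N1). set (p2 := mink v N2). set (p3 := mink v N3).
  vext; field; split; auto; intro; apply Hd; nra. Qed.

Lemma PE : mink al ga - mink be be =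
  dd * (n1 * (mink (IIp N1 N2 N3 1 0 l1 l2) N2 - mink (IIp N1 N2 N3 0 1 l1 l2) N1) +
        n2 * (mink (IIp N1 N2 N3 1 0 l1 l2) N3 - mink (IIp N1 N2 N3 0 1 l1 l2) N2)).
Proof. unfold al, be, ga, IIp, dd. destruct N1, N2, N3. unfold mink, vadd, vscal; simpl. ring. Qed.

Lemma Nfr1 : vscal (dd * dd) N1 = vadd (vadd (vscal (n2 * n2) al) (vscal (-2 * n2 * l2) be)) (vscal (l2 * l2) ga).
Proof. unfold al, be, ga, IIp, dd. vext; ring. Qed.
Lemma Nfr2 : vscal (dd * dd) N2 = vadd (vadd (vscal (- n1 * n2) al) (vscal (l1 * n2 + l2 * n1) be)) (vscal (- l1 * l2) ga).
Proof. unfold al, be, ga, IIp, dd. vext; ring. Qed.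
Lemma Nfr3 : vscal (dd * dd) N3 = vadd (vadd (vscal (n1 * n1) al) (vscal (-2 * n1 * l1) be)) (vscal (l1 * l1) ga).
Proof. unfold al, be, ga, IIp, dd. vext; ring. Qed.
End PW.

Lemma nullframe g11 g12 g22 c1 c2 : g11 * g22 - g12 * g12 < 0 -> qf g11 g12 g22 c1 c2 c1 c2 = 0 ->
  ~ (c1 = 0 /\ c2 = 0) -> exists n1 n2, qf g11 g12 g22 n1 n2 n1 n2 = 0 /\ qf g11 g12 g22 c1 c2 n1 n2 = 1.
Proof. intros Hg Hc Hnz.
  set (p := c1 * g11 + c2 * g12). set (q := c1 * g12 + c2 * g22).
  assert (Hpq : p * p + q * q <> 0).
  { intro H. assert (p = 0) by nra. assert (q = 0) by nra. apply Hnz.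
    assert (E1 : c1 * (g11 * g22 - g12 * g12) = g22 * p - g12 * q) by (unfold p, q; ring).
    assert (E2 : c2 * (g11 * g22 - g12 * g12) = - g12 * p + g11 * q) by (unfold p, q; ring).
    rewrite H0, H1 in E1, E2. split; nra. }
  set (v1 := p / (p * p + q * q)). set (v2 := q / (p * p + q * q)).
  assert (Hv : qf g11 g12 g22 c1 c2 v1 v2 = 1) by (unfold qf, v1, v2, p, q in *; field; auto).
  set (k := qf g11 g12 g22 v1 v2 v1 v2 / 2).
  exists (v1 - k * c1), (v2 - k * c2). split.
  - assert (E : qf g11 g12 g22 (v1 - k * c1) (v2 - k * c2) (v1 - k * c1) (v2 - k * c2) =
      qf g11 g12 g22 v1 v2 v1 v2 - 2 * k * qf g11 g12 g22 c1 c2 v1 v2 + k * k * qf g11 g12 g22 c1 c2 c1 c2)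
      by (unfold qf; ring). rewrite E, Hv, Hc. unfold k. field.
  - assert (E : qf g11 g12 g22 c1 c2 (v1 - k * c1) (v2 - k * c2) = qf g11 g12 g22 c1 c2 v1 v2 - k * qf g11 g12 g22 c1 c2 c1 c2)
      by (unfold qf; ring). rewrite E, Hv, Hc. ring. Qed.

Set Default Proof Using "All".

Section Main.
Variable U : R -> R -> Prop.
Variable X : R -> R -> V4.
Variable Z : V4.
Hypothesis HU : open2 U.
Hypothesis HX : smoothV_on U X.
Hypothesis Htl : forall s t, U s t -> gdet X s t < 0.
Hypothesis HZ : mink Z Z = 1.
Hypothesis Hlt : forall s t, U s t -> lightlike (tanpart X s t Z).
Hypothesis HII : forall s t, U s t ->
  II X s t (tan_coef1 X s t Z) (tan_coef2 X s t Z) (tan_coef1 X s t Z) (tan_coef2 X s t Z) <> vzero.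

Lemma gnz s t : U s t -> gdet X s t <> 0.
Proof. intros H; specialize (Htl s t H); lra. Qed.

Lemma Nnorm s t : U s t ->
  mink (N11 X s t) (Xs X s t) = 0 /\ mink (N11 X s t) (Xt X s t) = 0 /\
  mink (N12 X s t) (Xs X s t) = 0 /\ mink (N12 X s t) (Xt X s t) = 0 /\
  mink (N22 X s t) (Xs X s t) = 0 /\ mink (N22 X s t) (Xt X s t) = 0.
Proof. intros H. assert (Hg := gnz s t H). unfold N11, N12, N22.
  repeat split; first [apply nor_mink1 | apply nor_mink2]; auto. Qed.

Lemma qf_c s t : U s t -> qf (G11 (Xs X s t)) (G12 (Xs X s t) (Xt X s t)) (G22 (Xt X s t))
   (tan_coef1 X s t Z) (tan_coef2 X s t Z) (tan_coef1 X s t Z) (tan_coef2 X s t Z) = 0.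
Proof. intros H. destruct (Hlt s t H) as [_ H0]. unfold tanpart in H0. rewrite mink_tv in H0.
  exact H0. Qed.

Lemma frame s t : U s t -> exists n1 n2,
  qf (G11 (Xs X s t)) (G12 (Xs X s t) (Xt X s t)) (G22 (Xt X s t)) n1 n2 n1 n2 = 0 /\
  qf (G11 (Xs X s t)) (G12 (Xs X s t) (Xt X s t)) (G22 (Xt X s t)) (tan_coef1 X s t Z) (tan_coef2 X s t Z) n1 n2 = 1.
Proof. intros H. apply nullframe. exact (Htl s t H). apply qf_c; auto.
  intros [E1 E2]. destruct (Hlt s t H) as [H0 _]. apply H0. unfold tanpart, tvec. rewrite E1, E2.
  vext; ring. Qed.


Ltac pt s t Hst :=
  let Hg := fresh "Hg" in
  assert (Hg : G11 (Xs X s t) * G22 (Xt X s t) - G12 (Xs X s t) (Xt X s t) * G12 (Xs X s t) (Xt X s t) < 0)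
    by exact (Htl s t Hst);
  let H11 := fresh "H11" in let H12 := fresh "H12" in let H21 := fresh "H21" in
  let H22 := fresh "H22" in let H31 := fresh "H31" in let H32 := fresh "H32" in
  destruct (Nnorm s t Hst) as [H11 [H12 [H21 [H22 [H31 H32]]]]];
  let Hll := fresh "Hll" in assert (Hll := qf_c s t Hst).

Lemma GH_iff s t : U s t -> ((forall a b, GstarH X s t a b = (0, 0)) <->
  (forall a b, bivmet (Kv (Xs X s t) (Xt X s t) (N11 X s t) (N12 X s t) (N22 X s t) a b)
                      (Kv (Xs X s t) (Xt X s t) (N11 X s t) (N12 X s t) (N22 X s t) a b) = 0 /\
               bivwedge (Kv (Xs X s t) (Xt X s t) (N11 X s t) (N12 X s t) (N22 X s t) a b)
                      (Kv (Xs X s t) (Xt X s t) (N11 X s t) (N12 X s t) (N22 X s t) a b) = 0)).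
Proof. intros Hst.
  assert (Hp : phi X s t <> 0).
  { unfold phi. apply Rinv_neq_0_compat. apply Rgt_not_eq, sqrt_lt_R0. specialize (Htl s t Hst); lra. }
  split.
  - intros H a b. specialize (H a b). rewrite (GstarH_eq U X HU HX Htl s t a b Hst) in H.
    injection H; intros E2 E1. split.
    + apply Rmult_integral in E1; destruct E1 as [E1|E1]; [|exact E1]. exfalso. apply Rmult_integral in E1; tauto.
    + apply Rmult_integral in E2; destruct E2 as [E2|E2]; [|exact E2]. exfalso. apply Rmult_integral in E2; tauto.
  - intros H a b. rewrite (GstarH_eq U X HU HX Htl s t a b Hst). destruct (H a b) as [E1 E2].
    change (KK X s t a b) with (Kv (Xs X s t) (Xt X s t) (N11 X s t) (N12 X s t) (N22 X s t) a b).
    rewrite E1, E2. f_equal; ring. Qed.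

Lemma mc_be s t (Hst : U s t) n1 n2 :
  qf (G11 (Xs X s t)) (G12 (Xs X s t) (Xt X s t)) (G22 (Xt X s t)) n1 n2 n1 n2 = 0 ->
  qf (G11 (Xs X s t)) (G12 (Xs X s t) (Xt X s t)) (G22 (Xt X s t)) (tan_coef1 X s t Z) (tan_coef2 X s t Z) n1 n2 = 1 ->
  meancurv X s t = be (N11 X s t) (N12 X s t) (N22 X s t) (tan_coef1 X s t Z) (tan_coef2 X s t Z) n1 n2.
Proof. intros Hnn Hln. pt s t Hst.
  rewrite <- (PC _ _ _ _ _ Hg H11 H12 H21 H22 H31 H32 _ _ _ _ Hll Hnn Hln). reflexivity. Qed.

Lemma Ric_flat s t (Hst : U s t) n1 n2 v :
  qf (G11 (Xs X s t)) (G12 (Xs X s t) (Xt X s t)) (G22 (Xt X s t)) n1 n2 n1 n2 = 0 ->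
  qf (G11 (Xs X s t)) (G12 (Xs X s t) (Xt X s t)) (G22 (Xt X s t)) (tan_coef1 X s t Z) (tan_coef2 X s t Z) n1 n2 = 1 ->
  Ric X s t v = vzero ->
  vsub (vscal (mink v (ga (N11 X s t) (N12 X s t) (N22 X s t) n1 n2)) (al (N11 X s t) (N12 X s t) (N22 X s t) (tan_coef1 X s t Z) (tan_coef2 X s t Z)))
       (vscal (mink v (al (N11 X s t) (N12 X s t) (N22 X s t) (tan_coef1 X s t Z) (tan_coef2 X s t Z))) (ga (N11 X s t) (N12 X s t) (N22 X s t) n1 n2)) = vzero.
Proof. intros Hnn Hln HR. pt s t Hst.
  rewrite <- (PD _ _ _ _ _ Hg H11 H12 H21 H22 H31 H32 _ _ _ _ Hll Hnn Hln).
  change (Ricp (Xs X s t) (Xt X s t) (N11 X s t) (N12 X s t) (N22 X s t) v) with (Ric X s t v).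
  rewrite HR. vext; ring. Qed.


Lemma vscal_inj k v : k <> 0 -> vscal k v = vzero -> v = vzero.
Proof. intros Hk E. destruct v as [a b c d]. unfold vscal, vzero in *; simpl in *. injection E; intros.
  f_equal; apply (Rmult_eq_reg_l k); auto; lra. Qed.

Lemma aux0 k a c : vsub (vscal 0 a) (vscal k c) = vzero -> vscal k c = vzero.
Proof. destruct a, c; unfold vsub, vadd, vscal, vzero; simpl. intros E. injection E; intros.
  f_equal; lra. Qed.

Lemma dir_fwd : (forall s t, U s t -> forall a b, GstarH X s t a b = (0, 0)) ->
  minimal_on U X /\ flat_normal_on U X.
Proof. intros HG.
  assert (K : forall s t (Hst : U s t) n1 n2,
    qf (G11 (Xs X s t)) (G12 (Xs X s t) (Xt X s t)) (G22 (Xt X s t)) n1 n2 n1 n2 = 0 ->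
    qf (G11 (Xs X s t)) (G12 (Xs X s t) (Xt X s t)) (G22 (Xt X s t)) (tan_coef1 X s t Z) (tan_coef2 X s t Z) n1 n2 = 1 ->
    be (N11 X s t) (N12 X s t) (N22 X s t) (tan_coef1 X s t Z) (tan_coef2 X s t Z) n1 n2 = vzero /\
    ga (N11 X s t) (N12 X s t) (N22 X s t) n1 n2 = vzero).
  { intros s t Hst n1 n2 Hnn Hln. pt s t Hst.
    apply (PA _ _ _ _ _ Hg H11 H12 H21 H22 H31 H32 _ _ _ _ Hll Hnn Hln).
    apply GH_iff; auto. exact (HII s t Hst). }
  split.
  - intros s t Hst. destruct (frame s t Hst) as [n1 [n2 [Hnn Hln]]].
    rewrite (mc_be s t Hst n1 n2 Hnn Hln). apply K; auto.
  - intros xi [Hxi Hn] s t Hst. rewrite (Ricci U X HU HX Htl xi Hxi Hn s t Hst).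
    destruct (frame s t Hst) as [n1 [n2 [Hnn Hln]]]. pt s t Hst.
    assert (E := PD _ _ _ _ _ Hg H11 H12 H21 H22 H31 H32 _ _ _ _ Hll Hnn Hln (xi s t)).
    destruct (K s t Hst n1 n2 Hnn Hln) as [Hb Hc]. rewrite Hc in E.
    apply (vscal_inj (dd (tan_coef1 X s t Z) (tan_coef2 X s t Z) n1 n2)).
    exact (dd_nz _ _ _ _ _ Hg H11 H12 H21 H22 H31 H32 _ _ _ _ Hll Hnn Hln).
    change (Ric X s t (xi s t)) with (Ricp (Xs X s t) (Xt X s t) (N11 X s t) (N12 X s t) (N22 X s t) (xi s t)).
    rewrite E. rewrite mink_zeror. vext; ring. Qed.

Definition nuf s t := norpart X s t Z.
Definition Wf s t := tanpart X s t Z.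
Definition cf1 s t := tan_coef1 X s t Z.
Definition cf2 s t := tan_coef2 X s t Z.

Lemma sm_nu : smoothV_on U nuf.
Proof. exact (smV_nor U X HU HX Htl (fun _ _ => Z) (smV_const U HU Z)). Qed.
Lemma sm_W : smoothV_on U Wf.
Proof. exact (smV_tan U X HU HX Htl (fun _ _ => Z) (smV_const U HU Z)). Qed.
Lemma sm_c1 : smooth_on U cf1.
Proof. exact (sm_tc1 U X HU HX Htl (fun _ _ => Z) (smV_const U HU Z)). Qed.
Lemma sm_c2 : smooth_on U cf2.
Proof. exact (sm_tc2 U X HU HX Htl (fun _ _ => Z) (smV_const U HU Z)). Qed.
Lemma nu_normal : isnormal U X nuf.
Proof. intros s t Hst. split; [apply nor_mink1|apply nor_mink2]; apply gnz; auto. Qed.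

Lemma nu_consts s t : U s t -> mink (nuf s t) (nuf s t) = 1 /\ mink (nuf s t) Z = 1.
Proof. intros Hst. destruct (nu_normal s t Hst) as [A1 A2].
  destruct (Hlt s t Hst) as [_ HW].
  assert (E : Z = vadd (Wf s t) (nuf s t)) by apply decomp.
  assert (HWn : mink (nuf s t) (Wf s t) = 0).
  { unfold Wf, tanpart. rewrite mink_tvec. unfold nuf in *. rewrite A1, A2; ring. }
  fold (Wf s t) in HW.
  assert (H1 : mink (nuf s t) (nuf s t) = 1).
  { rewrite <- HZ. rewrite E. mexp. rewrite (mink_sym (Wf s t) (nuf s t)), HW, HWn. ring. }
  split; auto.
  rewrite E. mexp. rewrite HWn, H1. ring. Qed.

Lemma D_cst (f : R -> R) x c l : locally x (fun y => f y = c) -> is_derive f x l -> l = 0.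
Proof. intros E H. apply (Dunique f x). exact H. eapply Dext. 2: apply (Dconst c x).
  destruct E as [d Hd]. exists d. intros y Hy. symmetry. apply Hd; auto. Qed.

Lemma nuII s t : U s t ->
  mink (nuf s t) (IIp (N11 X s t) (N12 X s t) (N22 X s t) 1 0 (cf1 s t) (cf2 s t)) = 0 /\
  mink (nuf s t) (IIp (N11 X s t) (N12 X s t) (N22 X s t) 0 1 (cf1 s t) (cf2 s t)) = 0.
Proof. intros Hst.
  assert (EW : Wf s t = vsub Z (nuf s t)) by (unfold Wf, nuf, norpart, vsub; vext; ring).
  assert (Wt : forall M, mink M (Wf s t) = cf1 s t * mink M (Xs X s t) + cf2 s t * mink M (Xt X s t))
    by (intros M; unfold Wf, tanpart; rewrite mink_tvec; reflexivity).
  split.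
  - assert (D1 := Dv_mink _ _ _ _ _ (smV_d1 U HU _ s t sm_nu Hst) (smV_d1 U HU _ s t sm_nu Hst)).
    assert (D2 := Dv_mink _ _ _ _ _ (smV_d1 U HU _ s t sm_nu Hst) (Dv_const Z s)).
    apply D_cst with (c := 1) in D1. apply D_cst with (c := 1) in D2.
    2,3: destruct (open_loc1 U HU s t Hst) as [d Hd]; exists d; intros y Hy; apply nu_consts, Hd, Hy.
    rewrite mink_zeror in D2. rewrite (mink_sym (nuf s t)) in D1.
    assert (K : mink (pd1V nuf s t) (Wf s t) = 0) by (rewrite EW; mexp; lra).
    rewrite Wt in K. rewrite (Wg11 U X HU HX Htl nuf sm_nu nu_normal s t Hst) in K.
    rewrite (Wg12 U X HU HX Htl nuf sm_nu nu_normal s t Hst) in K.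
    unfold IIp. mexp. lra.
  - assert (D1 := Dv_mink _ _ _ _ _ (smV_d2 U HU _ s t sm_nu Hst) (smV_d2 U HU _ s t sm_nu Hst)).
    assert (D2 := Dv_mink _ _ _ _ _ (smV_d2 U HU _ s t sm_nu Hst) (Dv_const Z t)).
    apply D_cst with (c := 1) in D1. apply D_cst with (c := 1) in D2.
    2,3: destruct (open_loc2 U HU s t Hst) as [d Hd]; exists d; intros y Hy; apply nu_consts, Hd, Hy.
    rewrite mink_zeror in D2. rewrite (mink_sym (nuf s t)) in D1.
    assert (K : mink (pd2V nuf s t) (Wf s t) = 0) by (rewrite EW; mexp; lra).
    rewrite Wt in K. rewrite (Wg21 U X HU HX Htl nuf sm_nu nu_normal s t Hst) in K.
    rewrite (Wg22 U X HU HX Htl nuf sm_nu nu_normal s t Hst) in K.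
    unfold IIp. mexp. lra. Qed.

Lemma nor_id s t v : gdet X s t <> 0 -> mink v (Xs X s t) = 0 -> mink v (Xt X s t) = 0 -> norpart X s t v = v.
Proof. intros Hg H1 H2. unfold norpart, tanpart, tvec, tan_coef1, tan_coef2. rewrite H1, H2.
  unfold vsub; vext; field; auto. Qed.

Section Bwd.
Hypothesis Hmin : minimal_on U X.
Hypothesis Hflat : flat_normal_on U X.

Lemma flat_rel s t (Hst : U s t) n1 n2 :
  qf (G11 (Xs X s t)) (G12 (Xs X s t) (Xt X s t)) (G22 (Xt X s t)) n1 n2 n1 n2 = 0 ->
  qf (G11 (Xs X s t)) (G12 (Xs X s t) (Xt X s t)) (G22 (Xt X s t)) (tan_coef1 X s t Z) (tan_coef2 X s t Z) n1 n2 = 1 ->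
  let A := al (N11 X s t) (N12 X s t) (N22 X s t) (tan_coef1 X s t Z) (tan_coef2 X s t Z) in
  let C := ga (N11 X s t) (N12 X s t) (N22 X s t) n1 n2 in
  vsub (vscal (mink A C) A) (vscal (mink A A) C) = vzero.
Proof. intros Hnn Hln A C. pt s t Hst.
  assert (AN := IIp_norm _ _ _ _ _ Hg H11 H12 H21 H22 H31 H32 _ _ _ _ Hll Hnn Hln
     (tan_coef1 X s t Z) (tan_coef2 X s t Z) (tan_coef1 X s t Z) (tan_coef2 X s t Z)).
  fold A in AN. destruct AN as [A1 A2].
  set (xi := fun s' t' => norpart X s' t' A).
  assert (Hxi : normal_field X U xi).
  { split. exact (smV_nor U X HU HX Htl (fun _ _ => A) (smV_const U HU A)).
    intros s' t' H'. split; [apply nor_mink1|apply nor_mink2]; apply gnz; auto. }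
  assert (R0 := Hflat xi Hxi s t Hst). destruct Hxi as [Hxi1 Hxi2].
  rewrite (Ricci U X HU HX Htl xi Hxi1 Hxi2 s t Hst) in R0.
  unfold xi in R0. rewrite nor_id in R0; auto. 2: apply gnz; auto.
  exact (Ric_flat s t Hst n1 n2 A Hnn Hln R0). Qed.

Lemma nuN s t : U s t ->
  mink (nuf s t) (N11 X s t) = 0 /\ mink (nuf s t) (N12 X s t) = 0 /\ mink (nuf s t) (N22 X s t) = 0.
Proof. intros Hst. destruct (frame s t Hst) as [n1 [n2 [Hnn Hln]]].
  assert (FR := flat_rel s t Hst n1 n2 Hnn Hln). cbv zeta in FR.
  assert (Hb : be (N11 X s t) (N12 X s t) (N22 X s t) (tan_coef1 X s t Z) (tan_coef2 X s t Z) n1 n2 = vzero)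
    by (rewrite <- (mc_be s t Hst n1 n2 Hnn Hln); apply Hmin; auto).
  pt s t Hst.
  set (A := al (N11 X s t) (N12 X s t) (N22 X s t) (tan_coef1 X s t Z) (tan_coef2 X s t Z)) in *.
  set (C := ga (N11 X s t) (N12 X s t) (N22 X s t) n1 n2) in *.
  set (B := be (N11 X s t) (N12 X s t) (N22 X s t) (tan_coef1 X s t Z) (tan_coef2 X s t Z) n1 n2) in *.
  assert (HnA : mink (nuf s t) A = 0).
  { destruct (nuII s t Hst) as [K1 K2].
    assert (E : A = vadd (vscal (cf1 s t) (IIp (N11 X s t) (N12 X s t) (N22 X s t) 1 0 (cf1 s t) (cf2 s t)))
                         (vscal (cf2 s t) (IIp (N11 X s t) (N12 X s t) (N22 X s t) 0 1 (cf1 s t) (cf2 s t))))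
      by (unfold A, al, IIp, cf1, cf2; vext; ring).
    rewrite E. mexp. rewrite K1, K2. ring. }
  assert (HAA : 0 < mink A A).
  { destruct (posN _ _ _ _ _ Hg H11 H12 H21 H22 H31 H32 _ _ _ _ Hll Hnn Hln A) as [P1 P2].
    apply (IIp_norm _ _ _ _ _ Hg H11 H12 H21 H22 H31 H32 _ _ _ _ Hll Hnn Hln).
    destruct P1 as [P1|P1]; auto. exfalso. apply (HII s t Hst). apply P2. auto. }
  assert (HnC : mink (nuf s t) C = 0).
  { assert (E := f_equal (mink (nuf s t)) FR). mexp_in E. rewrite HnA in E. nra. }
  assert (HnB : mink (nuf s t) B = 0) by (rewrite Hb; apply mink_zeror).
  assert (Hd := dd_nz _ _ _ _ _ Hg H11 H12 H21 H22 H31 H32 _ _ _ _ Hll Hnn Hln).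
  assert (Hd2 : dd (tan_coef1 X s t Z) (tan_coef2 X s t Z) n1 n2 * dd (tan_coef1 X s t Z) (tan_coef2 X s t Z) n1 n2 <> 0)
    by (apply Rmult_integral_contrapositive; auto).
  assert (F1 := f_equal (mink (nuf s t)) (Nfr1 _ _ _ _ _ Hg H11 H12 H21 H22 H31 H32 _ _ _ _ Hll Hnn Hln)).
  assert (F2 := f_equal (mink (nuf s t)) (Nfr2 _ _ _ _ _ Hg H11 H12 H21 H22 H31 H32 _ _ _ _ Hll Hnn Hln)).
  assert (F3 := f_equal (mink (nuf s t)) (Nfr3 _ _ _ _ _ Hg H11 H12 H21 H22 H31 H32 _ _ _ _ Hll Hnn Hln)).
  fold A B C in F1, F2, F3. mexp_in F1. mexp_in F2. mexp_in F3. rewrite HnA, HnB, HnC in F1, F2, F3.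
  split; [|split]; (eapply Rmult_eq_reg_l; [|exact Hd2]; lra). Qed.

Lemma dW1 s t : U s t -> pd1V Wf s t = vsub vzero (pd1V nuf s t).
Proof. intros Hst. apply pd1V_eq. apply Dv_ext with (fun x => vsub Z (nuf x t)).
  exists (mkposreal 1 Rlt_0_1). intros y _. unfold Wf, nuf, norpart, vsub; vext; ring.
  apply Dv_sub. apply Dv_const. apply (smV_d1 U HU _ s t sm_nu Hst). Qed.
Lemma dW2 s t : U s t -> pd2V Wf s t = vsub vzero (pd2V nuf s t).
Proof. intros Hst. apply pd2V_eq. apply Dv_ext with (fun y => vsub Z (nuf s y)).
  exists (mkposreal 1 Rlt_0_1). intros y _. unfold Wf, nuf, norpart, vsub; vext; ring.
  apply Dv_sub. apply Dv_const. apply (smV_d2 U HU _ s t sm_nu Hst). Qed.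

Lemma W1_normal : isnormal U X (pd1V Wf).
Proof. intros s t Hst. rewrite (dW1 s t Hst). destruct (nuN s t Hst) as [K1 [K2 K3]].
  rewrite !mink_subl, !mink_zerol.
  rewrite (Wg11 U X HU HX Htl nuf sm_nu nu_normal s t Hst), (Wg12 U X HU HX Htl nuf sm_nu nu_normal s t Hst).
  rewrite K1, K2. split; ring. Qed.
Lemma W2_normal : isnormal U X (pd2V Wf).
Proof. intros s t Hst. rewrite (dW2 s t Hst). destruct (nuN s t Hst) as [K1 [K2 K3]].
  rewrite !mink_subl, !mink_zerol.
  rewrite (Wg21 U X HU HX Htl nuf sm_nu nu_normal s t Hst), (Wg22 U X HU HX Htl nuf sm_nu nu_normal s t Hst).
  rewrite K2, K3. split; ring. Qed.

Lemma W2_M s t M : U s t -> mink M (Xs X s t) = 0 -> mink M (Xt X s t) = 0 ->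
  mink (pd2V Wf s t) M = mink (IIp (N11 X s t) (N12 X s t) (N22 X s t) 0 1 (cf1 s t) (cf2 s t)) M.
Proof. intros Hst M1 M2.
  assert (E : pd2V Wf s t = vadd (vadd (vscal (pd2 cf1 s t) (Xs X s t)) (vscal (cf1 s t) (pd2V (Xs X) s t)))
                                 (vadd (vscal (pd2 cf2 s t) (Xt X s t)) (vscal (cf2 s t) (pd2V (Xt X) s t)))).
  { apply pd2V_eq. unfold Wf, tanpart, tvec.
    apply (Dv_add (fun y => vscal (cf1 s y) (Xs X s y)) (fun y => vscal (cf2 s y) (Xt X s y)));
    [apply (Dv_scal (fun y => cf1 s y) (fun y => Xs X s y)) | apply (Dv_scal (fun y => cf2 s y) (fun y => Xt X s y))].
    apply (sm_d2 U HU cf1 s t sm_c1 Hst). apply (smV_d2 U HU _ s t (sX1 U X HU HX Htl) Hst).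
    apply (sm_d2 U HU cf2 s t sm_c2 Hst). apply (smV_d2 U HU _ s t (sX2 U X HU HX Htl) Hst). }
  rewrite E. rewrite !(mink_sym _ M). mexp. rewrite M1, M2.
  rewrite (normal_mink X s t M (pd2V (Xs X) s t) M1 M2), (normal_mink X s t M (pd2V (Xt X) s t) M1 M2).
  change (norpart X s t (pd2V (Xs X) s t)) with (N12 X s t).
  change (norpart X s t (pd2V (Xt X) s t)) with (N22 X s t).
  unfold IIp. mexp. rewrite !(mink_sym M). ring. Qed.

Lemma W1_M s t M : U s t -> mink M (Xs X s t) = 0 -> mink M (Xt X s t) = 0 ->
  mink (pd1V Wf s t) M = mink (IIp (N11 X s t) (N12 X s t) (N22 X s t) 1 0 (cf1 s t) (cf2 s t)) M.
Proof. intros Hst M1 M2.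
  assert (E : pd1V Wf s t = vadd (vadd (vscal (pd1 cf1 s t) (Xs X s t)) (vscal (cf1 s t) (pd1V (Xs X) s t)))
                                 (vadd (vscal (pd1 cf2 s t) (Xt X s t)) (vscal (cf2 s t) (pd1V (Xt X) s t)))).
  { apply pd1V_eq. unfold Wf, tanpart, tvec.
    apply (Dv_add (fun x => vscal (cf1 x t) (Xs X x t)) (fun x => vscal (cf2 x t) (Xt X x t)));
    [apply (Dv_scal (fun x => cf1 x t) (fun x => Xs X x t)) | apply (Dv_scal (fun x => cf2 x t) (fun x => Xt X x t))].
    apply (sm_d1 U HU cf1 s t sm_c1 Hst). apply (smV_d1 U HU _ s t (sX1 U X HU HX Htl) Hst).
    apply (sm_d1 U HU cf2 s t sm_c2 Hst). apply (smV_d1 U HU _ s t (sX2 U X HU HX Htl) Hst). }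
  rewrite E. rewrite !(mink_sym _ M). mexp. rewrite M1, M2.
  rewrite (normal_mink X s t M (pd1V (Xs X) s t) M1 M2), (normal_mink X s t M (pd1V (Xt X) s t) M1 M2).
  change (pd1V (Xt X) s t) with (pd1V (pd2V X) s t). rewrite (schwarzV U HU X s t HX Hst).
  change (norpart X s t (pd1V (Xs X) s t)) with (N11 X s t).
  change (norpart X s t (pd2V (pd1V X) s t)) with (N12 X s t).
  unfold IIp. mexp. rewrite !(mink_sym M). ring. Qed.

Lemma bwd_pt s t : U s t -> forall a b, GstarH X s t a b = (0, 0).
Proof. intros Hst. destruct (frame s t Hst) as [n1 [n2 [Hnn Hln]]].
  apply GH_iff; auto.
  assert (Hb : be (N11 X s t) (N12 X s t) (N22 X s t) (tan_coef1 X s t Z) (tan_coef2 X s t Z) n1 n2 = vzero)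
    by (rewrite <- (mc_be s t Hst n1 n2 Hnn Hln); apply Hmin; auto).
  assert (FR := flat_rel s t Hst n1 n2 Hnn Hln). cbv zeta in FR.
  pt s t Hst.
  assert (sP1 : smoothV_on U (pd1V Wf)) by exact (smV_pd1 U HU Wf sm_W).
  assert (sP2 : smoothV_on U (pd2V Wf)) by exact (smV_pd2 U HU Wf sm_W).
  assert (SW := schwarzV U HU Wf s t sm_W Hst).
  assert (A1 := Wg11 U X HU HX Htl (pd2V Wf) sP2 W2_normal s t Hst).
  assert (A2 := Wg21 U X HU HX Htl (pd1V Wf) sP1 W1_normal s t Hst).
  assert (A3 := Wg12 U X HU HX Htl (pd2V Wf) sP2 W2_normal s t Hst).
  assert (A4 := Wg22 U X HU HX Htl (pd1V Wf) sP1 W1_normal s t Hst).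
  rewrite SW in A1, A3. rewrite A1 in A2. rewrite A3 in A4.
  rewrite (W2_M s t _ Hst H11 H12) in A2. rewrite (W1_M s t _ Hst H21 H22) in A2.
  rewrite (W2_M s t _ Hst H21 H22) in A4. rewrite (W1_M s t _ Hst H31 H32) in A4.
  unfold cf1, cf2 in A2, A4.
  assert (PEq := PE _ _ _ _ _ Hg H11 H12 H21 H22 H31 H32 _ _ _ _ Hll Hnn Hln).
  rewrite Hb, mink_zeror in PEq.
  assert (HAC : mink (al (N11 X s t) (N12 X s t) (N22 X s t) (tan_coef1 X s t Z) (tan_coef2 X s t Z))
                     (ga (N11 X s t) (N12 X s t) (N22 X s t) n1 n2) = 0).
  { assert (E1 : mink (IIp (N11 X s t) (N12 X s t) (N22 X s t) 1 0 (tan_coef1 X s t Z) (tan_coef2 X s t Z)) (N12 X s t) -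
                 mink (IIp (N11 X s t) (N12 X s t) (N22 X s t) 0 1 (tan_coef1 X s t Z) (tan_coef2 X s t Z)) (N11 X s t) = 0).
    { lra. }
    assert (E2 : mink (IIp (N11 X s t) (N12 X s t) (N22 X s t) 1 0 (tan_coef1 X s t Z) (tan_coef2 X s t Z)) (N22 X s t) -
                 mink (IIp (N11 X s t) (N12 X s t) (N22 X s t) 0 1 (tan_coef1 X s t Z) (tan_coef2 X s t Z)) (N12 X s t) = 0).
    { lra. }
    rewrite E1, E2 in PEq. lra. }
  set (A := al (N11 X s t) (N12 X s t) (N22 X s t) (tan_coef1 X s t Z) (tan_coef2 X s t Z)) in *.
  set (C := ga (N11 X s t) (N12 X s t) (N22 X s t) n1 n2) in *.
  assert (HAA : 0 < mink A A).
  { destruct (posN _ _ _ _ _ Hg H11 H12 H21 H22 H31 H32 _ _ _ _ Hll Hnn Hln A) as [P1 P2].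
    apply (IIp_norm _ _ _ _ _ Hg H11 H12 H21 H22 H31 H32 _ _ _ _ Hll Hnn Hln).
    destruct P1 as [P1|P1]; auto. exfalso. apply (HII s t Hst). apply P2. auto. }
  assert (Hc : C = vzero).
  { apply (vscal_inj (mink A A)). lra. rewrite HAC in FR. apply aux0 with A; exact FR. }
  exact (PB _ _ _ _ _ Hg H11 H12 H21 H22 H31 H32 _ _ _ _ Hll Hnn Hln Hb Hc). Qed.
End Bwd.

End Main.


Theorem mainTheorem20 :
  forall (U : R -> R -> Prop) (X : R -> R -> V4) (Z : V4),
    open2 U ->
    smoothV_on U X ->
    (forall s t, U s t -> timelike_at X s t) ->
    mink Z Z = 1 ->
    (forall s t, U s t -> lightlike (tanpart X s t Z)) ->
    (forall s t, U s t ->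
       II X s t (tan_coef1 X s t Z) (tan_coef2 X s t Z)
                (tan_coef1 X s t Z) (tan_coef2 X s t Z) <> vzero) ->
    ((forall s t, U s t -> forall a b : R, GstarH X s t a b = (0, 0)) <->
     (minimal_on U X /\ flat_normal_on U X)).
Proof.
  intros U X Z HU HX Htl HZ Hlt HII. split.
  - apply (dir_fwd U X Z HU HX Htl HZ Hlt HII).
  - intros [Hmin Hflat] s t Hst. exact (bwd_pt U X Z HU HX Htl HZ Hlt HII Hmin Hflat s t Hst).
Qed.
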